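(* Fix $2\le d\le7$. Let $w$ be a good sequence of weights normalized to be a probability distribution. There exists $c\in(0,1)$ such that $\psi^{(k)}(\mathsf R(w))$ belongs to $\mathcal{S}_{0,1,c}$ for all $k$ large enough, and $\psi^{(k)}(\mathsf R(w))$ converges pointwise as $k\to\infty$.
   Context: A sequence $w=(w(i))_{i\in\mathbb{Z}}\in[0,\infty)^{\mathbb{Z}}$ is good if $w(i)=w(-i)$ for all $i$, $w(0)>0$, and there exist an integer $k\ge0$ and $c\in[0,1)$ with $w(i)=w(i+1)$ for $0\le i<k$ and $w(i+1)\le c\,w(i)$ for $i\ge k$. For a probability distribution $z$ on $\mathbb{Z}$ set $A(z)_i=(z_{i-1}+z_i+z_{i+1})^d$, $F(z)=A(z)/\sum_iA(z)_i$. $\mathcal{E}$ is the set of symmetric probability distributions on $\mathbb{Z}$ whose support is an interval or all of $\mathbb{Z}$ (a normalized good $w$ lies in $\mathcal{E}$). $\mathsf R\colon\mathcal{E}\to[0,\infty)^{\{1,2,\dots\}}$, $\mathsf R(z)_i=z_i/z_{i-1}$ if $z_{i-1}\ne0$ and $0$ otherwise; $\mathsf R$ is injective on $\mathcal{E}$, $\mathcal{R}:=\mathsf R(\mathcal{E})$, $\psi:=\mathsf R\circ F\circ\mathsf R^{-1}\colon\mathcal{R}\to\mathcal{R}$, i.e. $\psi(x)_1=\big(\frac{1+x_1+x_1x_2}{1+2x_1}\big)^d$ and $\psi(x)_n=x_{n-1}^d\big(\frac{1+x_n+x_nx_{n+1}}{1+x_{n-1}+x_{n-1}x_n}\big)^d$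 for $n\ge2$. $\psi^{(k)}$ is the $k$-fold iterate. For reals $a,b,c$, $\mathcal{S}_{a,b,c}:=\{x\in\mathcal{R}: a\le x_1\le b,\ 0\le x_n\le c\ \forall n\ge2\}$. *)

(* Defs.v *)
From Stdlib Require Import Reals ZArith Lia.
Open Scope R_scope.

(* Sum of a nonnegative sequence over Z, grouped as z 0 + sum_{n>=1} (z n + z (-n)). *)
Definition Zsum_term (z : Z -> R) (n : nat) : R :=
  match n with
  | O => z 0%Z
  | S _ => z (Z.of_nat n) + z (- Z.of_nat n)%Z
  end.

Definition is_prob (z : Z -> R) : Prop :=
  (forall i, 0 <= z i) /\ infinite_sum (Zsum_term z) 1.

Definition good (w : Z -> R) : Prop :=
  (forall i, 0 <= w i) /\
  (forall i, w i = w (- i)%Z) /\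
  0 < w 0%Z /\
  exists (k : nat) (c : R), 0 <= c < 1 /\
    (forall i : nat, (i < k)%nat -> w (Z.of_nat i) = w (Z.of_nat (S i))) /\
    (forall i : nat, (k <= i)%nat -> w (Z.of_nat (S i)) <= c * w (Z.of_nat i)).

Definition in_E (z : Z -> R) : Prop :=
  is_prob z /\ (forall i, z i = z (- i)%Z) /\
  ((exists a b : Z, forall i, z i <> 0 <-> (a <= i <= b)%Z) \/
   (forall i, z i <> 0)).

(* Sequences indexed by {1,2,...} are represented as nat -> R; index 0 is
   unused and always set to 0. *)
Definition Rmap (z : Z -> R) (n : nat) : R :=
  match n with
  | O => 0
  | S _ => if Req_EM_T (z (Z.of_nat n - 1)%Z) 0 then 0
           else z (Z.of_nat n) / z (Z.of_nat n - 1)%Z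
  end.

Definition in_calR (x : nat -> R) : Prop := exists z, in_E z /\ x = Rmap z.

Definition psi (d : nat) (x : nat -> R) (n : nat) : R :=
  match n with
  | O => 0
  | S O => ((1 + x 1%nat + x 1%nat * x 2%nat) / (1 + 2 * x 1%nat)) ^ d
  | S m => x m ^ d *
      ((1 + x n + x n * x (S n)) / (1 + x m + x m * x n)) ^ d
  end.

Definition psi_iter (d k : nat) (x : nat -> R) : nat -> R := Nat.iter k (psi d) x.

Definition S_abc (a b c : R) (x : nat -> R) : Prop :=
  in_calR x /\ a <= x 1%nat <= b /\ (forall n : nat, (2 <= n)%nat -> 0 <= x n <= c).

(* Main.v *)
Require Import Defs.
From Stdlib Require Import Reals ZArith Lia Lra Psatz QArith Qreals Qround List Bool.
From Stdlib Require Import Classical FunctionalExtensionality.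
Import ListNotations.
Open Scope R_scope.
Open Scope Q_scope.
Fixpoint powQ (q : Q) (n : nat) : Q := match n with O => 1 | S k => q * powQ q k end.
Definition gQ (x1 x2 : Q) : Q := Qred ((1 + x1 + x1*x2) / (1 + 2*x1)).
Definition hQ (a b e : Q) : Q := Qred (a*(1+b+b*e) / (1+a+a*b)).
Record box := mkbox { bl1 : Q; bu1 : Q; bl2 : Q; bu2 : Q; bs : Q }.
Definition a3Q (b : box) : Q := if Qle_bool (bu2 b) (bs b) then bs b else bu2 b.
Definition dQ (d : nat) : Q := inject_Z (Z.of_nat d).
Definition A11 d b := dQ d * powQ (gQ (bl1 b) (bu2 b)) (pred d) * (1 - bl2 b) / ((1 + 2*bl1 b)*(1 + 2*bl1 b)).
Definition A12 d b := dQ d * powQ (gQ (bl1 b) (bu2 b)) (pred d) * bu1 b / (1 + 2*bl1 b).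
Definition k2 d b := dQ d * powQ (hQ (bu1 b) (bu2 b) (bs b)) (pred d).
Definition Dm2 b := 1 + bl1 b + bl1 b * bl2 b.
Definition A21 d b := k2 d b * (1 + bu2 b + bu2 b * bs b) / (Dm2 b * Dm2 b).
Definition A22 d b := k2 d b * (bu1 b * (1 + bs b + bu1 b * bs b)) / (Dm2 b * Dm2 b).
Definition A23 d b := k2 d b * (bu1 b * bu2 b) / Dm2 b.
Definition k3 d b := dQ d * powQ (hQ (bu2 b) (bs b) (bs b)) (pred d).
Definition A31 d b := k3 d b * (1 + bs b + bs b * bs b).
Definition A33 d b := k3 d b * (bu2 b * (1 + bs b + bu2 b * bs b)).
Definition A34 d b := k3 d b * (bu2 b * bs b).
Definition k4 d b := dQ d * powQ (hQ (bs b) (bs b) (bs b)) (pred d).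
Definition B4 d b := k4 d b * ((1 + bs b + bs b * bs b) + bs b * (1 + bs b + bs b * bs b) + bs b * bs b).
Definition chkcontr (d : nat) (L2 L3 rho : Q) (b : box) : bool :=
  Qle_bool (A11 d b + A12 d b / L2) rho &&
  Qle_bool (L2 * A21 d b + A22 d b + L2 * A23 d b / L3) rho &&
  Qle_bool (L3 * A31 d b / L2 + A33 d b + A34 d b) rho &&
  Qle_bool (B4 d b) rho &&
  Qle_bool 1 L2 && Qle_bool 1 L3 &&
  Qle_bool (bl1 b) (bu1 b) && Qle_bool (bl2 b) (bu2 b).
Close Scope Q_scope.

Open Scope Z_scope.
Record zbox := mkz { zl1 : Z; zu1 : Z; zl2 : Z; zu2 : Z; zs : Z }.
Definition DZ : Z := 65536.
Fixpoint powZ (z : Z) (n : nat) : Z := match n with O => 1 | S k => z * powZ z k end.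
Definition gN a b := DZ*DZ + a*DZ + a*b.
Definition gM a := DZ*DZ + 2*a*DZ.
Definition hN a b e := a*(DZ*DZ + b*DZ + b*e).
Definition hM a b := DZ*(DZ*DZ + a*DZ + a*b).
Definition lo d c N M := Z.leb (c * powZ M d) (DZ * powZ N d).
Definition hi d N M c := Z.leb (DZ * powZ N d) (c * powZ M d).
Definition za3 b := if Z.leb (zu2 b) (zs b) then zs b else zu2 b.
Definition chkstepZ d b b' :=
  lo d (zl1 b') (gN (zu1 b) (zl2 b)) (gM (zu1 b)) &&
  hi d (gN (zl1 b) (zu2 b)) (gM (zl1 b)) (zu1 b') &&
  lo d (zl2 b') (hN (zl1 b) (zl2 b) 0) (hM (zl1 b) (zl2 b)) &&
  hi d (hN (zu1 b) (zu2 b) (zs b)) (hM (zu1 b) (zu2 b)) (zu2 b') &&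
  hi d (hN (za3 b) (zs b) (zs b)) (hM (za3 b) (zs b)) (zs b') &&
  Z.leb 0 (zl1 b) && Z.leb 0 (zl2 b) && Z.leb 0 (zs b) && Z.leb 0 (zu1 b) && Z.leb 0 (zu2 b) &&
  Z.leb 0 (zl1 b') && Z.leb 0 (zl2 b') && Z.leb 0 (zs b') && Z.leb 0 (zu1 b') && Z.leb 0 (zu2 b') &&
  Z.leb (zu1 b') DZ && Z.leb (zu2 b') DZ && Z.leb (zs b') DZ.
Fixpoint chklistZ d b l : option zbox :=
  match l with nil => if chkstepZ d b b then Some b else None
  | b' :: l' => if chkstepZ d b b' then chklistZ d b' l' else None end.
Definition zb0 := mkz 0 65536 0 32768 32768.
Import List.ListNotations.
Definition zboxes2 : list zbox := [ mkz (29127) (65536) (0) (32113) (16384);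
 mkz (29127) (50752) (6204) (27485) (10426);
 mkz (34440) (48853) (7019) (19698) (7322);
 mkz (35191) (44152) (8865) (16711) (4204);
 mkz (37043) (42692) (9400) (14117) (3009);
 mkz (37624) (41092) (10100) (13006) (2225);
 mkz (38322) (40467) (10408) (12200) (1904);
 mkz (38613) (39938) (10692) (11821) (1697);
 mkz (38871) (39701) (10836) (11563) (1601);
 mkz (38995) (39523) (10946) (11432) (1538);
 mkz (39088) (39434) (11006) (11345) (1506);
 mkz (39137) (39373) (11048) (11298) (1485);
 mkz (39171) (39340) (11071) (11268) (1474);
 mkz (39189) (39318) (11086) (11251) (1467);
 mkz (39201) (39306) (11095) (11240) (1463);
 mkz (39208) (39298) (11100) (11234) (1460);
 mkz (39213) (39294) (11104) (11230) (1459);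
 mkz (39215) (39291) (11106) (11228) (1458);
 mkz (39217) (39290) (11107) (11227) (1458);
 mkz (39218) (39289) (11108) (11226) (1457) ].
Definition zboxes3 : list zbox := [ mkz (19418) (65536) (0) (22479) (8192);
 mkz (19418) (44323) (782) (13563) (1475);
 mkz (24051) (40598) (804) (6019) (350);
 mkz (25151) (34545) (1302) (4311) (40);
 mkz (27482) (33199) (1458) (3051) (16);
 mkz (28088) (31407) (1770) (2726) (6);
 mkz (28986) (30960) (1871) (2420) (5);
 mkz (29228) (30386) (2003) (2330) (3);
 mkz (29545) (30231) (2046) (2238) (3);
 mkz (29635) (30040) (2094) (2208) (3);
 mkz (29744) (29984) (2110) (2178) (3);
 mkz (29777) (29920) (2127) (2168) (3);
 mkz (29814) (29900) (2133) (2158) (3);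
 mkz (29826) (29878) (2139) (2154) (3);
 mkz (29839) (29871) (2141) (2151) (3);
 mkz (29843) (29864) (2143) (2150) (3);
 mkz (29847) (29861) (2144) (2148) (3);
 mkz (29849) (29859) (2145) (2148) (3);
 mkz (29851) (29858) (2145) (2148) (3);
 mkz (29851) (29857) (2145) (2147) (3) ].
Definition zboxes4 : list zbox := [ mkz (12945) (65536) (0) (15736) (4096);
 mkz (12945) (41566) (48) (6459) (114);
 mkz (17672) (37956) (48) (1865) (5);
 mkz (18801) (31074) (133) (1273) (1);
 mkz (21535) (29812) (162) (739) (1);
 mkz (22141) (27378) (247) (646) (1);
 mkz (23430) (26894) (269) (508) (1);
 mkz (23707) (25937) (319) (481) (1);
 mkz (24278) (25741) (331) (433) (1);
 mkz (24399) (25348) (355) (423) (1);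
 mkz (24646) (25266) (360) (404) (1);
 mkz (24698) (25102) (371) (400) (1);
 mkz (24803) (25067) (373) (393) (1);
 mkz (24825) (24998) (378) (391) (1);
 mkz (24870) (24984) (379) (388) (1);
 mkz (24879) (24955) (381) (387) (1);
 mkz (24898) (24948) (382) (386) (1);
 mkz (24903) (24936) (382) (386) (1);
 mkz (24910) (24933) (383) (385) (1);
 mkz (24912) (24928) (383) (385) (1) ].
Definition zboxes5 : list zbox := [ mkz (8630) (65536) (0) (11015) (2048);
 mkz (8630) (41641) (1) (3043) (5);
 mkz (12697) (38830) (1) (666) (1);
 mkz (13478) (31152) (7) (483) (1);
 mkz (16221) (30006) (9) (234) (1);
 mkz (16730) (26608) (20) (203) (1);
 mkz (18441) (26054) (22) (134) (1);
 mkz (18753) (24344) (33) (123) (1);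
 mkz (19783) (24054) (35) (97) (1);
 mkz (19969) (23142) (44) (92) (1);
 mkz (20575) (22984) (45) (80) (1);
 mkz (20683) (22484) (51) (78) (1);
 mkz (21034) (22397) (52) (72) (1);
 mkz (21096) (22119) (55) (71) (1);
 mkz (21297) (22070) (56) (68) (1);
 mkz (21333) (21915) (58) (67) (1);
 mkz (21447) (21887) (58) (66) (1);
 mkz (21467) (21800) (59) (65) (1);
 mkz (21532) (21784) (60) (64) (1);
 mkz (21544) (21735) (60) (64) (1) ].
Definition zboxes6 : list zbox := [ mkz (5753) (65536) (0) (7711) (1024);
 mkz (5753) (43539) (0) (1431) (1);
 mkz (8735) (41576) (0) (287) (1);
 mkz (9159) (33735) (0) (228) (1);
 mkz (11328) (32825) (0) (103) (1);
 mkz (11643) (28764) (0) (92) (1);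
 mkz (13266) (28243) (0) (54) (1);
 mkz (13504) (25788) (1) (50) (1);
 mkz (14736) (25458) (1) (34) (1);
 mkz (14917) (23854) (2) (32) (1);
 mkz (15854) (23632) (2) (24) (1);
 mkz (15991) (22538) (3) (23) (1);
 mkz (16702) (22386) (3) (19) (1);
 mkz (16805) (21620) (4) (18) (1);
 mkz (17342) (21512) (4) (16) (1);
 mkz (17420) (20967) (5) (15) (1);
 mkz (17823) (20889) (5) (14) (1);
 mkz (17882) (20498) (6) (14) (1);
 mkz (18183) (20441) (6) (12) (1);
 mkz (18228) (20158) (6) (12) (1);
 mkz (18452) (20116) (6) (12) (1);
 mkz (18485) (19910) (7) (12) (1);
 mkz (18652) (19880) (7) (11) (1);
 mkz (18677) (19730) (7) (11) (1);
 mkz (18800) (19707) (7) (11) (1);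
 mkz (18819) (19598) (8) (11) (1);
 mkz (18910) (19581) (8) (10) (1);
 mkz (18924) (19500) (8) (10) (1);
 mkz (18992) (19488) (8) (10) (1);
 mkz (19002) (19428) (8) (10) (1) ].
Definition zboxes7 : list zbox := [ mkz (3835) (65536) (0) (5398) (512);
 mkz (3835) (46421) (0) (675) (1);
 mkz (5780) (45148) (0) (144) (1);
 mkz (5976) (38029) (0) (125) (1);
 mkz (7339) (37409) (0) (60) (1);
 mkz (7484) (33502) (0) (56) (1);
 mkz (8524) (33123) (0) (34) (1);
 mkz (8638) (30583) (0) (32) (1);
 mkz (9476) (30323) (0) (22) (1);
 mkz (9570) (28508) (0) (21) (1);
 mkz (10269) (28315) (0) (16) (1);
 mkz (10349) (26938) (0) (15) (1);
 mkz (10946) (26787) (0) (12) (1);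
 mkz (11015) (25700) (0) (12) (1);
 mkz (11534) (25579) (0) (10) (1);
 mkz (11594) (24693) (0) (10) (1);
 mkz (12052) (24594) (0) (8) (1);
 mkz (12105) (23856) (0) (8) (1);
 mkz (12512) (23773) (0) (7) (1);
 mkz (12560) (23148) (0) (7) (1);
 mkz (12925) (23076) (0) (6) (1);
 mkz (12968) (22540) (0) (6) (1);
 mkz (13297) (22478) (0) (5) (1);
 mkz (13336) (22013) (0) (5) (1);
 mkz (13633) (21959) (0) (5) (1);
 mkz (13669) (21553) (0) (5) (1);
 mkz (13939) (21505) (0) (4) (1);
 mkz (13971) (21147) (0) (4) (1);
 mkz (14218) (21105) (0) (4) (1);
 mkz (14247) (20787) (0) (4) (1);
 mkz (14472) (20751) (0) (4) (1);
 mkz (14498) (20468) (0) (4) (1);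
 mkz (14704) (20436) (0) (3) (1);
 mkz (14728) (20183) (0) (3) (1);
 mkz (14917) (20154) (0) (3) (1);
 mkz (14939) (19926) (0) (3) (1);
 mkz (15113) (19900) (0) (3) (1);
 mkz (15133) (19695) (0) (3) (1);
 mkz (15292) (19672) (0) (3) (1);
 mkz (15310) (19487) (0) (3) (1);
 mkz (15457) (19467) (0) (3) (1);
 mkz (15473) (19299) (0) (3) (1);
 mkz (15608) (19281) (0) (3) (1);
 mkz (15622) (19129) (0) (3) (1);
 mkz (15747) (19113) (0) (2) (1);
 mkz (15760) (18974) (0) (2) (1);
 mkz (15875) (18960) (0) (2) (1);
 mkz (15887) (18834) (0) (2) (1);
 mkz (15992) (18821) (0) (2) (1);
 mkz (16003) (18707) (0) (2) (1);
 mkz (16100) (18695) (0) (2) (1);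
 mkz (16110) (18591) (0) (2) (1);
 mkz (16199) (18580) (0) (2) (1);
 mkz (16208) (18486) (0) (2) (1);
 mkz (16290) (18476) (0) (2) (1);
 mkz (16298) (18390) (0) (2) (1);
 mkz (16373) (18381) (0) (2) (1);
 mkz (16381) (18303) (0) (2) (1);
 mkz (16450) (18294) (0) (2) (1);
 mkz (16458) (18223) (0) (2) (1);
 mkz (16520) (18214) (0) (2) (1);
 mkz (16528) (18150) (0) (2) (1);
 mkz (16585) (18142) (0) (2) (1);
 mkz (16593) (18084) (0) (2) (1);
 mkz (16645) (18075) (0) (2) (1);
 mkz (16653) (18022) (0) (2) (1);
 mkz (16700) (18014) (0) (2) (1);
 mkz (16708) (17967) (0) (2) (1);
 mkz (16750) (17958) (0) (2) (1);
 mkz (16758) (17916) (0) (2) (1);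
 mkz (16796) (17908) (0) (2) (1);
 mkz (16804) (17870) (0) (2) (1);
 mkz (16838) (17862) (0) (2) (1);
 mkz (16846) (17828) (0) (2) (1);
 mkz (16877) (17820) (0) (2) (1);
 mkz (16884) (17789) (0) (2) (1);
 mkz (16913) (17782) (0) (2) (1);
 mkz (16919) (17753) (1) (2) (1);
 mkz (16946) (17747) (1) (2) (1);
 mkz (16952) (17720) (1) (2) (1);
 mkz (16977) (17714) (1) (2) (1);
 mkz (16982) (17689) (1) (2) (1);
 mkz (17006) (17684) (1) (2) (1);
 mkz (17010) (17661) (1) (2) (1);
 mkz (17032) (17657) (1) (2) (1);
 mkz (17035) (17635) (1) (2) (1);
 mkz (17056) (17632) (1) (2) (1);
 mkz (17059) (17612) (1) (2) (1);
 mkz (17077) (17609) (1) (2) (1);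
 mkz (17080) (17591) (1) (2) (1) ].

Close Scope Z_scope.
Open Scope Q_scope.
Definition toQ (b : zbox) : box := mkbox (zl1 b # 65536) (zu1 b # 65536) (zl2 b # 65536) (zu2 b # 65536) (zs b # 65536).
Definition params (d : nat) : list zbox * Q * Q :=
  match d with 2%nat => (zboxes2, 1, 1) | 3%nat => (zboxes3, 3, 3) | 4%nat => (zboxes4, 10, 10)
  | 5%nat => (zboxes5, 30, 30) | 6%nat => (zboxes6, 100, 100) | _ => (zboxes7, 100, 100) end.
Definition rhoQ : Q := 99#100.
Definition final_ok (d : nat) : bool :=
  let '(l, L2, L3) := params d in
  match chklistZ d zb0 l with Some b => chkcontr d L2 L3 rhoQ (toQ b) | None => false end.
Close Scope Q_scope.

Definition gR (x1 x2 : R) : R := (1 + x1 + x1*x2)/(1+2*x1).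
Definition hR (a b e : R) : R := a*(1+b+b*e)/(1+a+a*b).

Lemma psi_0 d x : psi d x 0 = 0.
Proof. reflexivity. Qed.
Lemma psi_1 d x : psi d x 1 = gR (x 1%nat) (x 2%nat) ^ d.
Proof. reflexivity. Qed.
Lemma psi_S d x k : psi d x (S (S k)) = hR (x (S k)) (x (S (S k))) (x (S (S (S k)))) ^ d.
Proof.
  unfold psi, hR. rewrite <- Rpow_mult_distr. f_equal. unfold Rdiv. ring.
Qed.

Lemma div_le_div x y x' y' : 0 < y -> 0 < y' -> x * y' <= x' * y -> x / y <= x' / y'.
Proof.
  intros Hy Hy' H. apply (Rmult_le_reg_r (y*y')). nra.
  replace (x / y * (y * y')) with (x * y') by (field; lra).
  replace (x' / y' * (y * y')) with (x' * y) by (field; lra). exact H.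
Qed.

Lemma div_nonneg x y : 0 <= x -> 0 < y -> 0 <= x / y.
Proof. intros. unfold Rdiv. apply Rmult_le_pos. lra. left. apply Rinv_0_lt_compat. lra. Qed.
Lemma div_le1 x y : 0 < y -> x <= y -> x / y <= 1.
Proof. intros. replace 1 with (y / y) by (field; lra). apply div_le_div; nra. Qed.

Lemma hR_nonneg a b e : 0 <= a -> 0 <= b -> 0 <= e -> 0 <= hR a b e.
Proof. intros. unfold hR. apply div_nonneg; [apply Rmult_le_pos; nra | nra]. Qed.

Lemma hR_mono a b e a' b' e' : 0 <= a <= a' -> 0 <= b <= b' -> 0 <= e <= e' ->
  hR a b e <= hR a' b' e'.
Proof.
  intros Ha Hb He. unfold hR.
  apply Rle_trans with (a'*(1+b+b*e)/(1+a'+a'*b)).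
  { apply div_le_div; try nra.
    assert (0 <= (1+b+b*e)) by nra. nra. }
  apply Rle_trans with (a'*(1+b'+b'*e)/(1+a'+a'*b')).
  { apply div_le_div; try nra.
    assert (0 <= a'*(b'-b)*(1+e+a'*e)) by (apply Rmult_le_pos; nra). nra. }
  apply div_le_div; try nra.
  assert (0 <= a'*b'*(e'-e)) by (apply Rmult_le_pos; nra).
  assert (0 <= 1+a'+a'*b') by nra. nra.
Qed.

Lemma hR_ccc c : 0 <= c -> hR c c c = c.
Proof. intros. unfold hR. field. nra. Qed.
Lemma hR_11c c : 0 <= c -> hR 1 1 c = (2+c)/3.
Proof. intros. unfold hR. field. Qed.

Lemma hR_le1 a b e : 0 <= a <= 1 -> 0 <= b <= 1 -> 0 <= e <= 1 -> hR a b e <= 1.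
Proof.
  intros. apply Rle_trans with (hR 1 1 1). apply hR_mono; lra.
  rewrite hR_ccc; lra.
Qed.

Lemma gR_nonneg x p : 0 <= x -> 0 <= p -> 0 <= gR x p.
Proof. intros. unfold gR. apply div_nonneg; nra. Qed.
Lemma gR_le1 x p : 0 <= x -> 0 <= p <= 1 -> gR x p <= 1.
Proof. intros. unfold gR. apply div_le1; nra. Qed.

Lemma gR_anti x x' p p' : 0 <= x <= x' -> 0 <= p <= p' -> p' <= 1 -> gR x' p <= gR x p'.
Proof.
  intros. unfold gR.
  apply Rle_trans with ((1+x'+x'*p')/(1+2*x')).
  { apply div_le_div; nra. }
  apply div_le_div; try nra.
Qed.

Lemma pow_le1 y n : 0 <= y <= 1 -> y ^ n <= 1.
Proof. intros. rewrite <- (pow1 n). apply pow_incr. lra. Qed.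

Lemma pow_anti y m n : 0 <= y <= 1 -> (m <= n)%nat -> y ^ n <= y ^ m.
Proof.
  intros Hy Hmn. induction Hmn. lra.
  simpl. apply Rle_trans with (y ^ m0); auto.
  assert (0 <= y ^ m0) by (apply pow_le; lra). nra.
Qed.

Lemma powdiff x y M k : 0 <= y <= x -> x <= M ->
  x ^ (S k) - y ^ (S k) <= INR (S k) * M ^ k * (x - y).
Proof.
  intros Hy HM. induction k.
  - simpl. lra.
  - assert (0 <= y ^ (S k)) by (apply pow_le; lra).
    assert (y ^ (S k) <= M ^ (S k)) by (apply pow_incr; lra).
    assert (0 <= M ^ k) by (apply pow_le; lra).
    replace (x ^ S (S k) - y ^ S (S k)) with (x * (x ^ S k - y ^ S k) + (x - y) * y ^ S k) by (simpl; ring).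
    rewrite S_INR. 
    assert (x * (x ^ S k - y ^ S k) <= M * (INR (S k) * M ^ k * (x - y))).
    { assert (0 <= x ^ S k - y ^ S k).
      { assert (y ^ S k <= x ^ S k) by (apply pow_incr; lra). lra. }
      assert (0 <= INR (S k)) by apply pos_INR. 
      apply Rle_trans with (M * (x ^ S k - y ^ S k)). apply Rmult_le_compat_r; lra.
      apply Rmult_le_compat_l; lra. }
    assert ((x - y) * y ^ S k <= (x-y) * M ^ S k) by (apply Rmult_le_compat_l; lra).
    replace (M ^ S k) with (M * M ^ k) in * by (simpl; ring). nra.
Qed.
Lemma frac_le x x' y y' : 0 <= x <= x' -> 0 < y' <= y -> x / y <= x' / y'.
Proof. intros. apply div_le_div; nra. Qed.

Lemma gdiff l1 u1 l2 L1 U1 L2 U2 : 0 <= l1 <= L1 -> L1 <= U1 <= u1 -> 0 <= l2 <= L2 -> L2 <= U2 <= 1 ->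
  gR L1 U2 - gR U1 L2 <= (1-l2)/((1+2*l1)*(1+2*l1)) * (U1-L1) + u1/(1+2*l1) * (U2-L2).
Proof.
  intros. unfold gR.
  assert (E1 : (1 + L1 + L1 * U2) / (1 + 2 * L1) - (1 + U1 + U1 * U2) / (1 + 2 * U1)
      = ((1-U2)*(U1-L1)) / ((1+2*L1)*(1+2*U1))) by (field; lra).
  assert (E2 : (1 + U1 + U1 * U2) / (1 + 2 * U1) - (1 + U1 + U1 * L2) / (1 + 2 * U1)
      = (U1*(U2-L2)) / (1+2*U1)) by (field; lra).
  assert (B1 : ((1-U2)*(U1-L1)) / ((1+2*L1)*(1+2*U1)) <= ((1-l2)*(U1-L1)) / ((1+2*l1)*(1+2*l1))).
  { apply frac_le. split. apply Rmult_le_pos; lra. apply Rmult_le_compat_r; lra.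
    split. nra. apply Rmult_le_compat; lra. }
  assert (B2 : (U1*(U2-L2)) / (1+2*U1) <= (u1*(U2-L2)) / (1+2*l1)).
  { apply frac_le. split. apply Rmult_le_pos; lra. apply Rmult_le_compat_r; lra. lra. }
  replace ((1-l2)/((1+2*l1)*(1+2*l1)) * (U1-L1)) with (((1-l2)*(U1-L1)) / ((1+2*l1)*(1+2*l1))) by (field; lra).
  replace (u1/(1+2*l1) * (U2-L2)) with ((u1*(U2-L2)) / (1+2*l1)) by (field; lra).
  lra.
Qed.

Lemma hdiff alo blo aL aU aM bL bU bM eL eU eM :
  0 <= alo <= aL -> aL <= aU <= aM -> 0 <= blo <= bL -> bL <= bU <= bM -> 0 <= eL <= eU -> eU <= eM ->
  hR aU bU eU - hR aL bL eL <=
    (1+bM+bM*eM)/((1+alo+alo*blo)*(1+alo+alo*blo)) * (aU-aL)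
  + aM*(1+eM+aM*eM)/((1+alo+alo*blo)*(1+alo+alo*blo)) * (bU-bL)
  + aM*bM/(1+alo+alo*blo) * (eU-eL).
Proof.
  intros. unfold hR. set (Dm := 1+alo+alo*blo).
  assert (HDm : 1 <= Dm) by (unfold Dm; nra).
  assert (D1 : Dm <= 1 + aL + aL*bL) by (unfold Dm; nra).
  assert (D2 : 1 + aL + aL*bL <= 1 + aL + aL*bU) by nra.
  assert (D3 : 1 + aL + aL*bU <= 1 + aU + aU*bU) by nra.
  assert (E1 : aU * (1 + bU + bU * eU) / (1 + aU + aU * bU) - aL * (1 + bU + bU * eU) / (1 + aL + aL * bU)
     = ((1+bU+bU*eU)*(aU-aL)) / ((1 + aU + aU * bU)*(1 + aL + aL * bU))) by (field; nra).
  assert (E2 : aL * (1 + bU + bU * eU) / (1 + aL + aL * bU) - aL * (1 + bL + bL * eU) / (1 + aL + aL * bL)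
     = (aL*(1+eU+aL*eU)*(bU-bL)) / ((1 + aL + aL * bU)*(1 + aL + aL * bL))) by (field; nra).
  assert (E3 : aL * (1 + bL + bL * eU) / (1 + aL + aL * bL) - aL * (1 + bL + bL * eL) / (1 + aL + aL * bL)
     = (aL*bL*(eU-eL)) / (1 + aL + aL * bL)) by (field; nra).
  assert (B1 : ((1+bU+bU*eU)*(aU-aL)) / ((1 + aU + aU * bU)*(1 + aL + aL * bU))
     <= ((1+bM+bM*eM)*(aU-aL)) / (Dm*Dm)).
  { apply frac_le. split. apply Rmult_le_pos. nra. lra. apply Rmult_le_compat_r. lra.
    assert (bU*eU <= bM*eM) by (apply Rmult_le_compat; lra). lra.
    split. nra. apply Rmult_le_compat; lra. }
  assert (B2 : (aL*(1+eU+aL*eU)*(bU-bL)) / ((1 + aL + aL * bU)*(1 + aL + aL * bL))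
     <= (aM*(1+eM+aM*eM)*(bU-bL)) / (Dm*Dm)).
  { apply frac_le. split. apply Rmult_le_pos. apply Rmult_le_pos. lra. nra. lra.
    apply Rmult_le_compat_r. lra. apply Rmult_le_compat. lra. nra. lra.
    assert (aL*eU <= aM*eM) by (apply Rmult_le_compat; lra). lra.
    split. nra. apply Rmult_le_compat; lra. }
  assert (B3 : (aL*bL*(eU-eL)) / (1 + aL + aL * bL) <= (aM*bM*(eU-eL)) / Dm).
  { apply frac_le. split. apply Rmult_le_pos. nra. lra. apply Rmult_le_compat_r. lra.
    apply Rmult_le_compat; lra. lra. }
  replace ((1+bM+bM*eM)/(Dm*Dm) * (aU-aL)) with (((1+bM+bM*eM)*(aU-aL)) / (Dm*Dm)) by (field; lra).
  replace (aM*(1+eM+aM*eM)/(Dm*Dm) * (bU-bL)) with ((aM*(1+eM+aM*eM)*(bU-bL)) / (Dm*Dm)) by (field; lra).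
  replace (aM*bM/Dm * (eU-eL)) with ((aM*bM*(eU-eL)) / Dm) by (field; lra).
  lra.
Qed.
Definition PhiL (d : nat) (L U : nat -> R) (n : nat) : R :=
  match n with
  | O => 0
  | S O => gR (U 1%nat) (L 2%nat) ^ d
  | S (S k) => hR (L (S k)) (L (S (S k))) (L (S (S (S k)))) ^ d
  end.
Definition PhiU (d : nat) (L U : nat -> R) (n : nat) : R :=
  match n with
  | O => 0
  | S O => gR (L 1%nat) (U 2%nat) ^ d
  | S (S k) => hR (U (S k)) (U (S (S k))) (U (S (S (S k)))) ^ d
  end.

Lemma PhiL_xx d x n : PhiL d x x n = psi d x n.
Proof. destruct n as [|[|k]]. reflexivity. reflexivity. simpl PhiL. rewrite psi_S. reflexivity. Qed.
Lemma PhiU_xx d x n : PhiU d x x n = psi d x n.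
Proof. destruct n as [|[|k]]. reflexivity. reflexivity. simpl PhiU. rewrite psi_S. reflexivity. Qed.

Definition chain (L L' U' U : nat -> R) : Prop :=
  forall n, (1 <= n)%nat -> 0 <= L n /\ L n <= L' n /\ L' n <= U' n /\ U' n <= U n.

Lemma nested d L L' U' U : chain L L' U' U -> U 2%nat <= 1 ->
  chain (PhiL d L U) (PhiL d L' U') (PhiU d L' U') (PhiU d L U).
Proof.
  intros H H2 n Hn.
  destruct n as [|[|k]]; [lia| |].
  - simpl.
    destruct (H 1%nat) as [a1 [a2 [a3 a4]]]; [lia|].
    destruct (H 2%nat) as [b1 [b2 [b3 b4]]]; [lia|].
    assert (g1 : gR (U 1%nat) (L 2%nat) <= gR (U' 1%nat) (L' 2%nat)) by (apply gR_anti; lra).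
    assert (g2 : gR (U' 1%nat) (L' 2%nat) <= gR (L' 1%nat) (U' 2%nat)) by (apply gR_anti; lra).
    assert (g3 : gR (L' 1%nat) (U' 2%nat) <= gR (L 1%nat) (U 2%nat)) by (apply gR_anti; lra).
    assert (g0 : 0 <= gR (U 1%nat) (L 2%nat)) by (apply gR_nonneg; lra).
    split. apply pow_le; lra.
    split. apply pow_incr; lra.
    split. apply pow_incr; lra.
    apply pow_incr; lra.
  - simpl PhiL; simpl PhiU.
    destruct (H (S k)) as [a1 [a2 [a3 a4]]]; [lia|].
    destruct (H (S (S k))) as [b1 [b2 [b3 b4]]]; [lia|].
    destruct (H (S (S (S k)))) as [c1 [c2 [c3 c4]]]; [lia|].
    assert (h0 : 0 <= hR (L (S k)) (L (S (S k))) (L (S (S (S k))))) by (apply hR_nonneg; lra).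
    split. apply pow_le; lra.
    split. apply pow_incr; split; [lra|]. apply hR_mono; lra.
    split. apply pow_incr; split; [apply hR_nonneg; lra|]. apply hR_mono; lra.
    apply pow_incr; split; [apply hR_nonneg; lra|]. apply hR_mono; lra.
Qed.

Lemma psi_in_box d L U x : chain L x x U -> U 2%nat <= 1 ->
  forall n, (1 <= n)%nat -> PhiL d L U n <= psi d x n <= PhiU d L U n.
Proof.
  intros H H2 n Hn. destruct (nested d L x x U H H2 n Hn) as [_ [A [_ B]]].
  rewrite PhiL_xx in A. rewrite PhiU_xx in B. lra.
Qed.
Lemma Q2R_red q : Q2R (Qred q) = Q2R q.
Proof. apply Qeq_eqR. apply Qred_correct. Qed.
Lemma Q2R1 : Q2R 1 = 1.
Proof. unfold Q2R; simpl. field. Qed.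
Lemma Q2R0 : Q2R 0 = 0.
Proof. unfold Q2R; simpl. field. Qed.
Lemma Q2R2 : Q2R 2 = 2.
Proof. unfold Q2R; simpl. field. Qed.
Lemma Q2R_div' x y : Q2R y <> 0 -> Q2R (x / y) = Q2R x / Q2R y.
Proof.
  intros H. apply Q2R_div. intro E. apply H. rewrite (Qeq_eqR _ _ E). apply Q2R0.
Qed.
Lemma Q2R_powQ q n : Q2R (powQ q n) = Q2R q ^ n.
Proof. induction n; simpl. apply Q2R1. rewrite Q2R_mult, IHn. reflexivity. Qed.
Lemma Q2R_dQ d : Q2R (dQ d) = INR d.
Proof. unfold dQ, Q2R, inject_Z; simpl. rewrite INR_IZR_INZ. field. Qed.
Ltac qpush := repeat first [rewrite Q2R_plus | rewrite Q2R_mult | rewrite Q2R_minus | rewrite Q2R1 | rewrite Q2R2 | rewrite Q2R0 | rewrite Q2R_red | rewrite Q2R_powQ | rewrite Q2R_dQ].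
Lemma Q2R_gQ x y : 0 <= Q2R x -> Q2R (gQ x y) = gR (Q2R x) (Q2R y).
Proof.
  intros H. unfold gQ, gR. rewrite Q2R_red, Q2R_div'.
  - qpush. reflexivity.
  - qpush. lra.
Qed.
Lemma Q2R_hQ a b e : 0 <= Q2R a -> 0 <= Q2R b -> Q2R (hQ a b e) = hR (Q2R a) (Q2R b) (Q2R e).
Proof.
  intros H H'. unfold hQ, hR. rewrite Q2R_red, Q2R_div'.
  - qpush. reflexivity.
  - qpush. nra.
Qed.
Lemma QleR a b : Qle_bool a b = true -> Q2R a <= Q2R b.
Proof. intros H. apply Qle_Rle. apply Qle_bool_iff. exact H. Qed.

Definition LB (b : box) (n : nat) : R :=
  match n with O => 0 | S O => Q2R (bl1 b) | S (S O) => Q2R (bl2 b) | _ => 0 end.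
Definition UB (b : box) (n : nat) : R :=
  match n with O => 0 | S O => Q2R (bu1 b) | S (S O) => Q2R (bu2 b) | _ => Q2R (bs b) end.
Definition validR (b : box) : Prop :=
  0 <= Q2R (bl1 b) /\ 0 <= Q2R (bl2 b) /\ 0 <= Q2R (bs b) /\ 0 <= Q2R (bu1 b) <= 1 /\
  0 <= Q2R (bu2 b) <= 1 /\ Q2R (bs b) <= 1.

Lemma a3Q_prop b : Q2R (bu2 b) <= Q2R (a3Q b) /\ Q2R (bs b) <= Q2R (a3Q b).
Proof.
  unfold a3Q. destruct (Qle_bool (bu2 b) (bs b)) eqn:E.
  - apply QleR in E. lra.
  - split. lra. assert (~ (bu2 b <= bs b)%Q) as N.
    { intro H. apply Qle_bool_iff in H. congruence. }
    apply Qnot_le_lt in N. apply Qlt_Rlt in N. lra.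
Qed.

Lemma Q2R_z z : Q2R (z # 65536) = IZR z / IZR DZ.
Proof. reflexivity. Qed.
Lemma DZpos : 0 < IZR DZ.
Proof. unfold DZ. lra. Qed.
Lemma IZR_powZ z n : IZR (powZ z n) = IZR z ^ n.
Proof. induction n; simpl. reflexivity. rewrite mult_IZR, IHn. reflexivity. Qed.
Ltac zpush := repeat first [rewrite plus_IZR | rewrite mult_IZR | rewrite IZR_powZ].

Lemma gN_R a b : 0 <= IZR a -> gR (IZR a / IZR DZ) (IZR b / IZR DZ) = IZR (gN a b) / IZR (gM a).
Proof. intros. unfold gR, gN, gM. zpush. assert (X := DZpos). field. split; nra. Qed.
Lemma gM_pos a : 0 <= IZR a -> 0 < IZR (gM a).
Proof. intros. unfold gM. zpush. assert (X := DZpos). nra. Qed.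
Lemma hN_R a b e : 0 <= IZR a -> 0 <= IZR b -> hR (IZR a / IZR DZ) (IZR b / IZR DZ) (IZR e / IZR DZ) = IZR (hN a b e) / IZR (hM a b).
Proof.
  intros. unfold hR, hN, hM. zpush. assert (X := DZpos).
  assert (0 < IZR DZ * IZR DZ + IZR a * IZR DZ + IZR a * IZR b).
  { assert (0 <= IZR a * IZR DZ) by nra. assert (0 <= IZR a * IZR b) by nra. nra. }
  field. split; [|lra]. intro E.
  assert (IZR DZ * IZR DZ + IZR DZ * IZR a + IZR a * IZR b = IZR DZ * IZR DZ + IZR a * IZR DZ + IZR a * IZR b) by ring.
  assert (0 < IZR DZ * IZR DZ + IZR DZ * IZR a + IZR a * IZR b) by lra.
  nra.
Qed.
Lemma hM_pos a b : 0 <= IZR a -> 0 <= IZR b -> 0 < IZR (hM a b).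
Proof.
  intros. unfold hM. zpush. assert (X := DZpos).
  assert (0 <= IZR a * IZR DZ) by nra. assert (0 <= IZR a * IZR b) by nra.
  apply Rmult_lt_0_compat. lra. nra.
Qed.

Lemma pow_frac N M d : 0 < M -> (N / M) ^ d = N ^ d / M ^ d.
Proof. intros. unfold Rdiv. rewrite Rpow_mult_distr. rewrite pow_inv. reflexivity. Qed.

Lemma lo_sound d c N M : lo d c N M = true -> 0 < IZR M -> IZR c / IZR DZ <= (IZR N / IZR M) ^ d.
Proof.
  intros H HM. unfold lo in H. apply Z.leb_le in H. apply IZR_le in H. rewrite !mult_IZR, !IZR_powZ in H.
  rewrite pow_frac by auto. assert (X := DZpos). assert (0 < IZR M ^ d) by (apply pow_lt; auto).
  apply div_le_div; auto. lra.
Qed.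
Lemma hi_sound d c N M : hi d N M c = true -> 0 < IZR M -> (IZR N / IZR M) ^ d <= IZR c / IZR DZ.
Proof.
  intros H HM. unfold hi in H. apply Z.leb_le in H. apply IZR_le in H. rewrite !mult_IZR, !IZR_powZ in H.
  rewrite pow_frac by auto. assert (X := DZpos). assert (0 < IZR M ^ d) by (apply pow_lt; auto).
  apply div_le_div; auto. lra.
Qed.
Lemma leb_R a b : Z.leb a b = true -> IZR a <= IZR b.
Proof. intros H. apply IZR_le. apply Z.leb_le. exact H. Qed.

Definition stepR d b b' : Prop :=
  Q2R (bl1 b') <= gR (Q2R (bu1 b)) (Q2R (bl2 b)) ^ d /\
  gR (Q2R (bl1 b)) (Q2R (bu2 b)) ^ d <= Q2R (bu1 b') /\
  Q2R (bl2 b') <= hR (Q2R (bl1 b)) (Q2R (bl2 b)) 0 ^ d /\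
  hR (Q2R (bu1 b)) (Q2R (bu2 b)) (Q2R (bs b)) ^ d <= Q2R (bu2 b') /\
  (exists a3, Q2R (bu2 b) <= a3 /\ Q2R (bs b) <= a3 /\ hR a3 (Q2R (bs b)) (Q2R (bs b)) ^ d <= Q2R (bs b')) /\
  validR b'.

Lemma za3_prop b : (zu2 b <= za3 b)%Z /\ (zs b <= za3 b)%Z.
Proof. unfold za3. destruct (Z.leb (zu2 b) (zs b)) eqn:E. apply Z.leb_le in E. lia. apply Z.leb_gt in E. lia. Qed.

Lemma chkstepZ_sound d b b' : chkstepZ d b b' = true -> stepR d (toQ b) (toQ b').
Proof.
  intros H. unfold chkstepZ in H. repeat rewrite andb_true_iff in H.
  destruct H as [[[[[[[[[[[[[[[[[c1 c2] c3] c4] c5] p1] p2] p3] p4] p5] c6] c7] c8] c9] c10] c11] c12] c13].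
  apply leb_R in p1, p2, p3, p4, p5, c6, c7, c8, c9, c10, c11, c12, c13.
  unfold stepR. cbv [toQ validR bl1 bu1 bl2 bu2 bs]. rewrite !Q2R_z.
  assert (X := DZpos). unfold DZ in c11, c12, c13.
  assert (Hd : forall z, 0 <= IZR z -> 0 <= IZR z / IZR DZ) by (intros; apply div_nonneg; lra).
  assert (Hd1 : forall z, IZR z <= 65536 -> IZR z / IZR DZ <= 1) by (intros; apply div_le1; unfold DZ in *; lra).
  destruct (za3_prop b) as [a1 a2]. apply IZR_le in a1, a2.
  assert (q1 := lo_sound _ _ _ _ c1 (gM_pos _ p4)). rewrite <- gN_R in q1 by lra.
  assert (q2 := hi_sound _ _ _ _ c2 (gM_pos _ p1)). rewrite <- gN_R in q2 by lra.
  assert (q3 := lo_sound _ _ _ _ c3 (hM_pos _ _ p1 p2)). rewrite <- hN_R in q3 by lra.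
  assert (q4 := hi_sound _ _ _ _ c4 (hM_pos _ _ p4 p5)). rewrite <- hN_R in q4 by lra.
  assert (q5 := hi_sound _ _ _ _ c5 (hM_pos (za3 b) (zs b) ltac:(lra) p3)). rewrite <- hN_R in q5 by lra.
  replace (0 / IZR DZ) with 0 in q3 by (unfold Rdiv; rewrite Rmult_0_l; reflexivity).
  split; [exact q1|]. split; [exact q2|]. split; [exact q3|]. split; [exact q4|]. split.
  - exists (IZR (za3 b) / IZR DZ). split. apply Rmult_le_compat_r. left; apply Rinv_0_lt_compat; lra. lra.
    split. apply Rmult_le_compat_r. left; apply Rinv_0_lt_compat; lra. lra. exact q5.
  - repeat split; first [apply Hd; lra | apply Hd1; lra].
Qed.
Lemma step_sound d b b' : stepR d b b' -> validR b ->
  validR b' /\ (forall n, (1 <= n)%nat -> LB b' n <= PhiL d (LB b) (UB b) n /\ PhiU d (LB b) (UB b) n <= UB b' n).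
Proof.
  intros [c1 [c2 [c3 [c4 [[a3 [a1 [a2 c5]]] V']]]]] V. split; [exact V'|].
  destruct V as [v1 [v2 [v3 [v4 [v5 v6]]]]].
  destruct V' as [w1 [w2 [w3 [w4 [w5 w6]]]]].
  intros n Hn. destruct n as [|[|[|[|k]]]]; [lia| | | |].
  - simpl. lra.
  - simpl. lra.
  - simpl. split. apply pow_le. apply hR_nonneg; lra.
    apply Rle_trans with (2 := c5). apply pow_incr. split. apply hR_nonneg; lra. apply hR_mono; lra.
  - simpl. split. apply pow_le. apply hR_nonneg; lra.
    apply Rle_trans with (2 := c5). apply pow_incr. split. apply hR_nonneg; lra. apply hR_mono; lra.
Qed.
Lemma hpdiff k alo blo aL aU aM bL bU bM eL eU eM :
  0 <= alo <= aL -> aL <= aU <= aM -> 0 <= blo <= bL -> bL <= bU <= bM -> 0 <= eL <= eU -> eU <= eM ->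
  hR aU bU eU ^ S k - hR aL bL eL ^ S k <=
    (INR (S k) * hR aM bM eM ^ k * (1+bM+bM*eM)/((1+alo+alo*blo)*(1+alo+alo*blo))) * (aU-aL)
  + (INR (S k) * hR aM bM eM ^ k * (aM*(1+eM+aM*eM))/((1+alo+alo*blo)*(1+alo+alo*blo))) * (bU-bL)
  + (INR (S k) * hR aM bM eM ^ k * (aM*bM)/(1+alo+alo*blo)) * (eU-eL).
Proof.
  intros.
  assert (h1 : hR aL bL eL <= hR aU bU eU) by (apply hR_mono; lra).
  assert (h2 : hR aU bU eU <= hR aM bM eM) by (apply hR_mono; lra).
  assert (h0 : 0 <= hR aL bL eL) by (apply hR_nonneg; lra).
  assert (P := powdiff (hR aU bU eU) (hR aL bL eL) (hR aM bM eM) k ltac:(lra) h2).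
  assert (HM : 0 <= INR (S k) * hR aM bM eM ^ k).
  { apply Rmult_le_pos. apply pos_INR. apply pow_le. lra. }
  assert (Hd := hdiff alo blo aL aU aM bL bU bM eL eU eM H H0 H1 H2 H3 H4).
  apply Rle_trans with (1 := P).
  apply Rle_trans with (INR (S k) * hR aM bM eM ^ k * ((1+bM+bM*eM)/((1+alo+alo*blo)*(1+alo+alo*blo)) * (aU-aL)
  + aM*(1+eM+aM*eM)/((1+alo+alo*blo)*(1+alo+alo*blo)) * (bU-bL)
  + aM*bM/(1+alo+alo*blo) * (eU-eL))).
  apply Rmult_le_compat_l; lra.
  right. field. nra.
Qed.
Definition cA11 d l1 l2 u2 := INR d * gR l1 u2 ^ pred d * (1 - l2) / ((1+2*l1)*(1+2*l1)).
Definition cA12 d l1 u1 u2 := INR d * gR l1 u2 ^ pred d * u1 / (1+2*l1).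
Definition ck2 d u1 u2 s := INR d * hR u1 u2 s ^ pred d.
Definition cDm l1 l2 := 1 + l1 + l1 * l2.
Definition cA21 d l1 u1 l2 u2 s := ck2 d u1 u2 s * (1 + u2 + u2 * s) / (cDm l1 l2 * cDm l1 l2).
Definition cA22 d l1 u1 l2 u2 s := ck2 d u1 u2 s * (u1 * (1 + s + u1 * s)) / (cDm l1 l2 * cDm l1 l2).
Definition cA23 d l1 u1 l2 u2 s := ck2 d u1 u2 s * (u1 * u2) / cDm l1 l2.
Definition ck3 d u2 s := INR d * hR u2 s s ^ pred d.
Definition cA31 d u2 s := ck3 d u2 s * (1 + s + s * s).
Definition cA33 d u2 s := ck3 d u2 s * (u2 * (1 + s + u2 * s)).
Definition cA34 d u2 s := ck3 d u2 s * (u2 * s).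
Definition ck4 d s := INR d * hR s s s ^ pred d.
Definition cB4 d s := ck4 d s * ((1 + s + s * s) + s * (1 + s + s * s) + s * s).

Lemma lin3 c1 c2 c3 w1 w2 w3 m1 m2 m3 lp T W :
  0 <= c1 -> 0 <= c2 -> 0 <= c3 -> 0 < m1 -> 0 < m2 -> 0 < m3 -> 0 < lp ->
  m1 * w1 <= T -> m2 * w2 <= T -> m3 * w3 <= T ->
  W <= c1 * w1 + c2 * w2 + c3 * w3 ->
  lp * W <= (lp * c1 / m1 + lp * c2 / m2 + lp * c3 / m3) * T.
Proof.
  intros.
  assert (E1 : c1 * w1 <= c1 / m1 * T).
  { replace (c1 / m1 * T) with (c1 * (T / m1)) by (field; lra). apply Rmult_le_compat_l. lra.
    apply (Rmult_le_reg_l m1). lra. replace (m1 * (T / m1)) with T by (field; lra). lra. }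
  assert (E2 : c2 * w2 <= c2 / m2 * T).
  { replace (c2 / m2 * T) with (c2 * (T / m2)) by (field; lra). apply Rmult_le_compat_l. lra.
    apply (Rmult_le_reg_l m2). lra. replace (m2 * (T / m2)) with T by (field; lra). lra. }
  assert (E3 : c3 * w3 <= c3 / m3 * T).
  { replace (c3 / m3 * T) with (c3 * (T / m3)) by (field; lra). apply Rmult_le_compat_l. lra.
    apply (Rmult_le_reg_l m3). lra. replace (m3 * (T / m3)) with T by (field; lra). lra. }
  replace ((lp * c1 / m1 + lp * c2 / m2 + lp * c3 / m3) * T) with (lp * (c1 / m1 * T + c2 / m2 * T + c3 / m3 * T)) by (field; lra).
  apply Rmult_le_compat_l; lra.
Qed.

Definition lam (L2 L3 : R) (n : nat) : R :=
  match n with O => 1 | S O => 1 | S (S O) => L2 | _ => L3 end.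

Lemma contr_step (d : nat) (l1 u1 l2 u2 s La2 La3 rho T : R) (L U : nat -> R) :
  (2 <= d)%nat ->
  0 <= l1 -> 0 <= l2 -> 0 <= s -> u2 <= 1 -> 1 <= La2 -> 1 <= La3 -> 0 <= T ->
  cA11 d l1 l2 u2 + cA12 d l1 u1 u2 / La2 <= rho ->
  La2 * cA21 d l1 u1 l2 u2 s + cA22 d l1 u1 l2 u2 s + La2 * cA23 d l1 u1 l2 u2 s / La3 <= rho ->
  La3 * cA31 d u2 s / La2 + cA33 d u2 s + cA34 d u2 s <= rho ->
  cB4 d s <= rho ->
  (forall n, (1 <= n)%nat -> 0 <= L n <= U n) ->
  l1 <= L 1%nat -> U 1%nat <= u1 -> l2 <= L 2%nat -> U 2%nat <= u2 ->
  (forall n, (3 <= n)%nat -> U n <= s) ->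
  (forall n, (1 <= n)%nat -> lam La2 La3 n * (U n - L n) <= T) ->
  forall n, (1 <= n)%nat -> lam La2 La3 n * (PhiU d L U n - PhiL d L U n) <= rho * T.
Proof.
  intros Hd Hl1 Hl2 Hs Hu2 HL2 HL3 HT C1 C2 C3 C4 HLU B1 B2 B3 B4 B5 HW n Hn.
  destruct d as [|k]; [lia|]. simpl pred in *.
  assert (W1 := HW 1%nat ltac:(lia)). assert (W2 := HW 2%nat ltac:(lia)).
  simpl lam in W1, W2.
  destruct (HLU 1%nat) as [p1 q1]; [lia|]. destruct (HLU 2%nat) as [p2 q2]; [lia|].
  destruct n as [|[|[|[|n]]]]; [lia| | | |].
  -
    simpl. simpl lam.
    set (M := gR l1 u2).
    assert (Hg1 : gR (U 1%nat) (L 2%nat) <= gR (L 1%nat) (U 2%nat)) by (apply gR_anti; lra).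
    assert (Hg2 : gR (L 1%nat) (U 2%nat) <= M) by (apply gR_anti; lra).
    assert (Hg0 : 0 <= gR (U 1%nat) (L 2%nat)) by (apply gR_nonneg; lra).
    assert (P := powdiff (gR (L 1%nat) (U 2%nat)) (gR (U 1%nat) (L 2%nat)) M k ltac:(lra) Hg2).
    assert (G := gdiff l1 u1 l2 (L 1%nat) (U 1%nat) (L 2%nat) (U 2%nat) ltac:(lra) ltac:(lra) ltac:(lra) ltac:(lra)).
    assert (HM : 0 <= INR (S k) * M ^ k).
    { apply Rmult_le_pos. apply pos_INR. apply pow_le. unfold M. apply gR_nonneg; lra. }
    assert (Wle : gR (L 1%nat) (U 2%nat) ^ S k - gR (U 1%nat) (L 2%nat) ^ S k <=
       cA11 (S k) l1 l2 u2 * (U 1%nat - L 1%nat) + cA12 (S k) l1 u1 u2 * (U 2%nat - L 2%nat) + 0 * 0).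
    { unfold cA11, cA12. simpl pred. fold M.
      apply Rle_trans with (1 := P).
      apply Rle_trans with (INR (S k) * M ^ k * ((1-l2)/((1+2*l1)*(1+2*l1)) * (U 1%nat - L 1%nat) + u1/(1+2*l1) * (U 2%nat - L 2%nat))).
      apply Rmult_le_compat_l; lra.
      right. field. lra. }
    assert (c0 : 0 <= cA11 (S k) l1 l2 u2).
    { unfold cA11. simpl pred. fold M. apply div_nonneg. apply Rmult_le_pos. exact HM. lra. nra. }
    assert (c0' : 0 <= cA12 (S k) l1 u1 u2).
    { unfold cA12. simpl pred. fold M. apply div_nonneg. apply Rmult_le_pos. exact HM. lra. lra. }
    assert (X := lin3 _ _ 0 (U 1%nat - L 1%nat) (U 2%nat - L 2%nat) 0 1 La2 1 1 T _ c0 c0' ltac:(lra) ltac:(lra) ltac:(lra) ltac:(lra) ltac:(lra) ltac:(lra) W2 ltac:(lra) Wle).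
    apply Rle_trans with (1 := X).
    apply Rmult_le_compat_r. lra.
    replace (1 * cA11 (S k) l1 l2 u2 / 1 + 1 * cA12 (S k) l1 u1 u2 / La2 + 1 * 0 / 1) with (cA11 (S k) l1 l2 u2 + cA12 (S k) l1 u1 u2 / La2) by (field; lra).
    lra.
  -
    simpl PhiU; simpl PhiL. simpl lam.
    assert (W3 := HW 3%nat ltac:(lia)). simpl lam in W3.
    destruct (HLU 3%nat) as [p3 q3]; [lia|].
    assert (U3s := B5 3%nat ltac:(lia)).
    assert (Hh := hpdiff k l1 l2 (L 1%nat) (U 1%nat) u1 (L 2%nat) (U 2%nat) u2 (L 3%nat) (U 3%nat) s
      ltac:(lra) ltac:(lra) ltac:(lra) ltac:(lra) ltac:(lra) ltac:(lra)).
    assert (Dp : 1 <= 1 + l1 + l1 * l2) by nra.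
    assert (HM : 0 <= INR (S k) * hR u1 u2 s ^ k).
    { apply Rmult_le_pos. apply pos_INR. apply pow_le. apply hR_nonneg; lra. }
    assert (c1 : 0 <= INR (S k) * hR u1 u2 s ^ k * (1+u2+u2*s)/((1+l1+l1*l2)*(1+l1+l1*l2))).
    { apply div_nonneg. apply Rmult_le_pos. lra. nra. nra. }
    assert (c2 : 0 <= INR (S k) * hR u1 u2 s ^ k * (u1*(1+s+u1*s))/((1+l1+l1*l2)*(1+l1+l1*l2))).
    { apply div_nonneg. apply Rmult_le_pos. lra. apply Rmult_le_pos. lra. nra. nra. }
    assert (c3 : 0 <= INR (S k) * hR u1 u2 s ^ k * (u1*u2)/(1+l1+l1*l2)).
    { apply div_nonneg. apply Rmult_le_pos. lra. nra. nra. }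
    assert (X := lin3 _ _ _ (U 1%nat - L 1%nat) (U 2%nat - L 2%nat) (U 3%nat - L 3%nat) 1 La2 La3 La2 T _ c1 c2 c3
      ltac:(lra) ltac:(lra) ltac:(lra) ltac:(lra) ltac:(lra) W2 W3 Hh).
    apply Rle_trans with (1 := X).
    apply Rmult_le_compat_r. lra.
    unfold cA21, cA22, cA23, ck2, cDm in C2. simpl pred in C2.
    replace (La2 * (INR (S k) * hR u1 u2 s ^ k * (1 + u2 + u2 * s) / ((1 + l1 + l1 * l2) * (1 + l1 + l1 * l2))) / 1 +
      La2 * (INR (S k) * hR u1 u2 s ^ k * (u1 * (1 + s + u1 * s)) / ((1 + l1 + l1 * l2) * (1 + l1 + l1 * l2))) / La2 +
      La2 * (INR (S k) * hR u1 u2 s ^ k * (u1 * u2) / (1 + l1 + l1 * l2)) / La3)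
    with (La2 * (INR (S k) * hR u1 u2 s ^ k * (1 + u2 + u2 * s) / ((1 + l1 + l1 * l2) * (1 + l1 + l1 * l2))) +
     INR (S k) * hR u1 u2 s ^ k * (u1 * (1 + s + u1 * s)) / ((1 + l1 + l1 * l2) * (1 + l1 + l1 * l2)) +
     La2 * (INR (S k) * hR u1 u2 s ^ k * (u1 * u2) / (1 + l1 + l1 * l2)) / La3) by (field; lra).
    exact C2.
  -
    simpl PhiU; simpl PhiL. simpl lam.
    assert (W3 := HW 3%nat ltac:(lia)). assert (W4 := HW 4%nat ltac:(lia)). simpl lam in W3, W4.
    destruct (HLU 3%nat) as [p3 q3]; [lia|]. destruct (HLU 4%nat) as [p4 q4]; [lia|].
    assert (U3s := B5 3%nat ltac:(lia)). assert (U4s := B5 4%nat ltac:(lia)).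
    assert (Hh := hpdiff k 0 0 (L 2%nat) (U 2%nat) u2 (L 3%nat) (U 3%nat) s (L 4%nat) (U 4%nat) s
      ltac:(lra) ltac:(lra) ltac:(lra) ltac:(lra) ltac:(lra) ltac:(lra)).
    assert (HM : 0 <= INR (S k) * hR u2 s s ^ k).
    { apply Rmult_le_pos. apply pos_INR. apply pow_le. apply hR_nonneg; lra. }
    assert (c1 : 0 <= INR (S k) * hR u2 s s ^ k * (1+s+s*s)/((1+0+0*0)*(1+0+0*0))).
    { apply div_nonneg. apply Rmult_le_pos. lra. nra. nra. }
    assert (c2 : 0 <= INR (S k) * hR u2 s s ^ k * (u2*(1+s+u2*s))/((1+0+0*0)*(1+0+0*0))).
    { apply div_nonneg. apply Rmult_le_pos. lra. apply Rmult_le_pos. lra. nra. nra. }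
    assert (c3 : 0 <= INR (S k) * hR u2 s s ^ k * (u2*s)/(1+0+0*0)).
    { apply div_nonneg. apply Rmult_le_pos. lra. nra. nra. }
    assert (X := lin3 _ _ _ (U 2%nat - L 2%nat) (U 3%nat - L 3%nat) (U 4%nat - L 4%nat) La2 La3 La3 La3 T _ c1 c2 c3
      ltac:(lra) ltac:(lra) ltac:(lra) ltac:(lra) W2 W3 W4 Hh).
    apply Rle_trans with (1 := X).
    apply Rmult_le_compat_r. lra.
    unfold cA31, cA33, cA34, ck3 in C3. simpl pred in C3.
    apply Rle_trans with (2 := C3). right. field. lra.
  -
    set (n' := S (S (S (S n)))) in *.
    simpl PhiU; simpl PhiL.
    replace (lam La2 La3 (S n')) with La3 by reflexivity.
    assert (W3 := HW (S (S (S n))) ltac:(lia)). assert (W4 := HW n' ltac:(unfold n'; lia)).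
    assert (W5 := HW (S n') ltac:(unfold n'; lia)).
    replace (lam La2 La3 (S (S (S n)))) with La3 in W3 by reflexivity.
    replace (lam La2 La3 n') with La3 in W4 by reflexivity.
    replace (lam La2 La3 (S n')) with La3 in W5 by reflexivity.
    destruct (HLU (S (S (S n)))) as [p3 q3]; [lia|]. destruct (HLU n') as [p4 q4]; [unfold n'; lia|].
    destruct (HLU (S n')) as [p5 q5]; [unfold n'; lia|].
    assert (U3s := B5 (S (S (S n))) ltac:(lia)). assert (U4s := B5 n' ltac:(unfold n'; lia)).
    assert (U5s := B5 (S n') ltac:(unfold n'; lia)).
    assert (Hh := hpdiff k 0 0 (L (S (S (S n)))) (U (S (S (S n)))) s (L n') (U n') s (L (S n')) (U (S n')) s
      ltac:(lra) ltac:(lra) ltac:(lra) ltac:(lra) ltac:(lra) ltac:(lra)).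
    assert (HM : 0 <= INR (S k) * hR s s s ^ k).
    { apply Rmult_le_pos. apply pos_INR. apply pow_le. apply hR_nonneg; lra. }
    assert (c1 : 0 <= INR (S k) * hR s s s ^ k * (1+s+s*s)/((1+0+0*0)*(1+0+0*0))).
    { apply div_nonneg. apply Rmult_le_pos. lra. nra. nra. }
    assert (c2 : 0 <= INR (S k) * hR s s s ^ k * (s*(1+s+s*s))/((1+0+0*0)*(1+0+0*0))).
    { apply div_nonneg. apply Rmult_le_pos. lra. apply Rmult_le_pos. lra. nra. nra. }
    assert (c3 : 0 <= INR (S k) * hR s s s ^ k * (s*s)/(1+0+0*0)).
    { apply div_nonneg. apply Rmult_le_pos. lra. nra. nra. }
    assert (X := lin3 _ _ _ (U (S (S (S n))) - L (S (S (S n)))) (U n' - L n') (U (S n') - L (S n')) La3 La3 La3 La3 T _ c1 c2 c3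
      ltac:(lra) ltac:(lra) ltac:(lra) ltac:(lra) W3 W4 W5 Hh).
    apply Rle_trans with (1 := X).
    apply Rmult_le_compat_r. lra.
    unfold cB4, ck4 in C4. simpl pred in C4.
    apply Rle_trans with (2 := C4). right. field. lra.
Qed.
Ltac qall := repeat first [rewrite Q2R_plus | rewrite Q2R_mult | rewrite Q2R_minus | rewrite Q2R1 | rewrite Q2R2 | rewrite Q2R0 | rewrite Q2R_red | rewrite Q2R_powQ | rewrite Q2R_dQ | rewrite Q2R_div' ].

Section CF.
Variables (d : nat) (b : box).
Hypothesis V : validR b.
Let l1 := Q2R (bl1 b). Let u1 := Q2R (bu1 b). Let l2 := Q2R (bl2 b). Let u2 := Q2R (bu2 b). Let s := Q2R (bs b).

Lemma QA11 : Q2R (A11 d b) = cA11 d l1 l2 u2.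
Proof. destruct V as [v1 [v2 [v3 [v4 [v5 v6]]]]]. unfold A11, cA11. qall; try (rewrite Q2R_gQ by lra); try reflexivity; nra. Qed.
Lemma QA12 : Q2R (A12 d b) = cA12 d l1 u1 u2.
Proof. destruct V as [v1 [v2 [v3 [v4 [v5 v6]]]]]. unfold A12, cA12. qall; try (rewrite Q2R_gQ by lra); try reflexivity; nra. Qed.
Lemma QA21 : Q2R (A21 d b) = cA21 d l1 u1 l2 u2 s.
Proof. destruct V as [v1 [v2 [v3 [v4 [v5 v6]]]]]. unfold A21, cA21, k2, ck2, Dm2, cDm. qall; try (rewrite Q2R_hQ by lra); try reflexivity; nra. Qed.
Lemma QA22 : Q2R (A22 d b) = cA22 d l1 u1 l2 u2 s.
Proof. destruct V as [v1 [v2 [v3 [v4 [v5 v6]]]]]. unfold A22, cA22, k2, ck2, Dm2, cDm. qall; try (rewrite Q2R_hQ by lra); try reflexivity; nra. Qed.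
Lemma QA23 : Q2R (A23 d b) = cA23 d l1 u1 l2 u2 s.
Proof. destruct V as [v1 [v2 [v3 [v4 [v5 v6]]]]]. unfold A23, cA23, k2, ck2, Dm2, cDm. qall; try (rewrite Q2R_hQ by lra); try reflexivity; nra. Qed.
Lemma QA31 : Q2R (A31 d b) = cA31 d u2 s.
Proof. destruct V as [v1 [v2 [v3 [v4 [v5 v6]]]]]. unfold A31, cA31, k3, ck3. qall; try (rewrite Q2R_hQ by lra); reflexivity. Qed.
Lemma QA33 : Q2R (A33 d b) = cA33 d u2 s.
Proof. destruct V as [v1 [v2 [v3 [v4 [v5 v6]]]]]. unfold A33, cA33, k3, ck3. qall; try (rewrite Q2R_hQ by lra); reflexivity. Qed.
Lemma QA34 : Q2R (A34 d b) = cA34 d u2 s.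
Proof. destruct V as [v1 [v2 [v3 [v4 [v5 v6]]]]]. unfold A34, cA34, k3, ck3. qall; try (rewrite Q2R_hQ by lra); reflexivity. Qed.
Lemma QB4 : Q2R (B4 d b) = cB4 d s.
Proof. destruct V as [v1 [v2 [v3 [v4 [v5 v6]]]]]. unfold B4, cB4, k4, ck4. qall; try (rewrite Q2R_hQ by lra); reflexivity. Qed.
End CF.

Lemma contr_facts d L2 L3 rho b : chkcontr d L2 L3 rho b = true -> validR b ->
  let l1 := Q2R (bl1 b) in let u1 := Q2R (bu1 b) in let l2 := Q2R (bl2 b) in
  let u2 := Q2R (bu2 b) in let s := Q2R (bs b) in let La2 := Q2R L2 in let La3 := Q2R L3 in
  cA11 d l1 l2 u2 + cA12 d l1 u1 u2 / La2 <= Q2R rho /\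
  La2 * cA21 d l1 u1 l2 u2 s + cA22 d l1 u1 l2 u2 s + La2 * cA23 d l1 u1 l2 u2 s / La3 <= Q2R rho /\
  La3 * cA31 d u2 s / La2 + cA33 d u2 s + cA34 d u2 s <= Q2R rho /\
  cB4 d s <= Q2R rho /\ 1 <= La2 /\ 1 <= La3 /\ l1 <= u1 /\ l2 <= u2.
Proof.
  intros H V. unfold chkcontr in H. repeat rewrite andb_true_iff in H.
  destruct H as [[[[[[[c1 c2] c3] c4] c5] c6] c7] c8].
  apply QleR in c1, c2, c3, c4, c5, c6, c7, c8. rewrite Q2R1 in c5, c6.
  intros l1 u1 l2 u2 s La2 La3.
  rewrite Q2R_plus, Q2R_div', QA11, QA12 in c1 by (auto; lra).
  rewrite !Q2R_plus, Q2R_div', !Q2R_mult, QA21, QA22, QA23 in c2 by (auto; lra).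
  rewrite !Q2R_plus, Q2R_div', !Q2R_mult, QA31, QA33, QA34 in c3 by (auto; lra).
  rewrite QB4 in c4 by auto.
  repeat split; assumption.
Qed.
Definition inB (b : box) (x : nat -> R) : Prop := chain (LB b) x x (UB b).

Lemma UB2 b : validR b -> UB b 2%nat <= 1.
Proof. intros [v1 [v2 [v3 [v4 [v5 v6]]]]]. simpl. lra. Qed.
Lemma LB_nonneg b n : validR b -> 0 <= LB b n.
Proof. intros [v1 [v2 [v3 [v4 [v5 v6]]]]]. destruct n as [|[|[|n]]]; simpl; lra. Qed.

Lemma step_inB d b b' x : stepR d b b' -> validR b -> inB b x -> inB b' (psi d x).
Proof.
  intros H V Hx. destruct (step_sound d b b' H V) as [V' S'].
  intros n Hn. assert (N := psi_in_box d (LB b) (UB b) x Hx (UB2 b V) n Hn).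
  destruct (S' n Hn). assert (0 <= LB b' n) by (apply LB_nonneg; auto). lra.
Qed.

Lemma psi_iter_S d k x : psi_iter d (S k) x = psi d (psi_iter d k x).
Proof. reflexivity. Qed.
Lemma psi_iter_S' d k x : psi_iter d (S k) x = psi_iter d k (psi d x).
Proof. unfold psi_iter. rewrite Nat.iter_succ_r. reflexivity. Qed.
Lemma psi_iter_add d p q x : psi_iter d (p + q) x = psi_iter d p (psi_iter d q x).
Proof. unfold psi_iter. apply Nat.iter_add. Qed.

Lemma chklistZ_sound d l : forall zb zb', chklistZ d zb l = Some zb' -> validR (toQ zb) ->
  validR (toQ zb') /\ stepR d (toQ zb') (toQ zb') /\ forall x, inB (toQ zb) x -> inB (toQ zb') (psi_iter d (length l) x).
Proof.
  induction l as [|b1 l IH]; intros zb zb' H V.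
  - simpl in H. destruct (chkstepZ d zb zb) eqn:E; [|discriminate]. injection H as <-.
    split; [auto|]. split; [apply chkstepZ_sound; auto|]. intros x Hx. exact Hx.
  - simpl in H. destruct (chkstepZ d zb b1) eqn:E; [|discriminate].
    assert (St := chkstepZ_sound d zb b1 E).
    destruct (step_sound d _ _ St V) as [V' _].
    destruct (IH _ _ H V') as [A [B C]]. split; [auto|]. split; [auto|].
    intros x Hx. simpl length. rewrite psi_iter_S'. apply C. apply (step_inB d (toQ zb)); auto.
Qed.

Lemma inB_iter d b x : stepR d b b -> validR b -> inB b x -> forall m, inB b (psi_iter d m x).
Proof.
  intros H V Hx m. induction m. exact Hx. rewrite psi_iter_S. apply (step_inB d b b); auto.
Qed.

Fixpoint BI (d : nat) (L0 U0 : nat -> R) (j : nat) : (nat -> R) * (nat -> R) :=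
  match j with
  | O => (L0, U0)
  | S j' => let p := BI d L0 U0 j' in (PhiL d (fst p) (snd p), PhiU d (fst p) (snd p))
  end.

Lemma BI_inv d b y : validR b -> stepR d b b -> inB b y -> forall j,
  chain (LB b) (fst (BI d (LB b) (UB b) j)) (snd (BI d (LB b) (UB b) j)) (UB b) /\
  chain (fst (BI d (LB b) (UB b) j)) (psi_iter d j y) (psi_iter d j y) (snd (BI d (LB b) (UB b) j)).
Proof.
  intros V H Hy j. induction j as [|j [IH1 IH2]].
  - simpl. split; [|exact Hy]. intros n Hn. destruct (Hy n Hn) as [a [b' [c e]]]. lra.
  - simpl BI. cbv zeta. simpl fst; simpl snd.
    set (BL := fst (BI d (LB b) (UB b) j)) in *. set (BU := snd (BI d (LB b) (UB b) j)) in *.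
    destruct (step_sound d b b H V) as [_ S'].
    assert (N1 := nested d (LB b) BL BU (UB b) IH1 (UB2 b V)).
    assert (BU2 : BU 2%nat <= 1).
    { destruct (IH1 2%nat ltac:(lia)) as [_ [_ [_ q]]]. assert (Hu := UB2 b V). lra. }
    assert (N2 := nested d BL (psi_iter d j y) (psi_iter d j y) BU IH2 BU2).
    split.
    + intros n Hn. destruct (N1 n Hn) as [a1 [a2 [a3 a4]]]. destruct (S' n Hn) as [s1 s2].
      assert (0 <= LB b n) by (apply LB_nonneg; auto). lra.
    + intros n Hn. destruct (N2 n Hn) as [a1 [a2 [a3 a4]]]. rewrite PhiL_xx in a2, a3. rewrite PhiU_xx in a3, a4.
      rewrite psi_iter_S. lra.
Qed.
Lemma Q2R_rho : Q2R rhoQ = 99/100.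
Proof. unfold rhoQ, Q2R. simpl. field. Qed.

Lemma all_ok : forall d, (2 <= d <= 7)%nat -> final_ok d = true.
Proof. intros d Hd. destruct d as [|[|[|[|[|[|[|[|d]]]]]]]]; try (exfalso; lia); vm_compute; reflexivity. Qed.

Lemma validR_b0 : validR (toQ zb0).
Proof. unfold validR, toQ, zb0; simpl. rewrite !Q2R_z. unfold DZ. repeat split; lra. Qed.

Lemma conv_from_box d x : (2 <= d <= 7)%nat -> inB (toQ zb0) x ->
  forall n, (1 <= n)%nat -> exists l, Un_cv (fun k => psi_iter d k x n) l.
Proof.
  intros Hd Hx n Hn.
  assert (OK := all_ok d Hd). unfold final_ok in OK.
  destruct (params d) as [[lb L2] L3].
  destruct (chklistZ d zb0 lb) as [zb|] eqn:E; [|discriminate].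
  destruct (chklistZ_sound d lb zb0 zb E validR_b0) as [V [Hst Hin]].
  set (N := length lb) in *. set (b := toQ zb) in *.
  assert (CF := contr_facts d L2 L3 rhoQ b OK V). cbv zeta in CF. rewrite Q2R_rho in CF.
  destruct CF as [F1 [F2 [F3 [F4 [F5 [F6 [F7 F8]]]]]]].
  set (l1 := Q2R (bl1 b)) in *. set (u1 := Q2R (bu1 b)) in *. set (l2 := Q2R (bl2 b)) in *.
  set (u2 := Q2R (bu2 b)) in *. set (s := Q2R (bs b)) in *. set (La2 := Q2R L2) in *. set (La3 := Q2R L3) in *.
  assert (V' := V). destruct V' as [v1 [v2 [v3 [v4 [v5 v6]]]]]. fold l1 l2 s u1 u2 in v1, v2, v3, v4, v5, v6.
  set (V0 := (u1 - l1) + La2 * (u2 - l2) + La3 * s).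
  assert (HV0 : 0 <= V0) by (unfold V0; nra).
  set (BL := fun j => fst (BI d (LB b) (UB b) j)). set (BU := fun j => snd (BI d (LB b) (UB b) j)).
  assert (CT : forall y, inB b y -> forall j m, (1 <= m)%nat -> lam La2 La3 m * (BU j m - BL j m) <= (99/100)^j * V0).
  { intros y Hy j. induction j as [|j IH].
    - intros m Hm. change (lam La2 La3 m * (UB b m - LB b m) <= (99/100)^0 * V0). rewrite pow_O.
      destruct m as [|[|[|m]]]; [lia| | |]; cbn [UB LB lam]; fold u1 l1 u2 l2 s; unfold V0; nra.
    - intros m Hm.
      destruct (BI_inv d b y V Hst Hy j) as [C1 _].
      unfold BL, BU. simpl BI. cbv zeta. simpl fst; simpl snd. simpl pow. rewrite Rmult_assoc.
      apply (contr_step d l1 u1 l2 u2 s La2 La3 (99/100) ((99/100)^j * V0)); try lia; try lra; auto.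
      + apply Rmult_le_pos. apply pow_le. lra. lra.
      + intros p Hp. destruct (C1 p Hp) as [a1 [a2 [a3 a4]]]. lra.
      + destruct (C1 1%nat ltac:(lia)) as [a1 [a2 [a3 a4]]]. exact a2.
      + destruct (C1 1%nat ltac:(lia)) as [a1 [a2 [a3 a4]]]. exact a4.
      + destruct (C1 2%nat ltac:(lia)) as [a1 [a2 [a3 a4]]]. exact a2.
      + destruct (C1 2%nat ltac:(lia)) as [a1 [a2 [a3 a4]]]. exact a4.
      + intros p Hp. destruct (C1 p ltac:(lia)) as [a1 [a2 [a3 a4]]].
        destruct p as [|[|[|p]]]; try lia; exact a4. }
  set (xN := psi_iter d N x).
  assert (HxN : inB b xN) by (apply Hin; exact Hx).
  assert (Hlam : 1 <= lam La2 La3 n).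
  { destruct n as [|[|[|n]]]; simpl; lra. }
  assert (Cauchy : Cauchy_crit (fun k => psi_iter d k x n)).
  { intros eps Heps.
    destruct (pow_lt_1_zero (99/100) ltac:(rewrite Rabs_pos_eq; lra) (eps / (V0 + 1))) as [J HJ].
    { apply Rdiv_lt_0_compat; lra. }
    exists (J + N)%nat. intros k m Hk Hm.
    assert (Hr : Rabs ((99/100)^J) < eps / (V0 + 1)) by (apply HJ; lia).
    rewrite Rabs_pos_eq in Hr by (apply pow_le; lra).
    assert (Bk : forall k, (k >= J + N)%nat -> BL J n <= psi_iter d k x n <= BU J n).
    { intros k' Hk'. replace k' with (J + (k' - J - N + N))%nat by lia.
      rewrite psi_iter_add. rewrite (psi_iter_add d (k' - J - N) N x). fold xN.
      destruct (BI_inv d b (psi_iter d (k' - J - N) xN) V Hst (inB_iter d b xN Hst V HxN _) J) as [_ C2].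
      destruct (C2 n Hn) as [a1 [a2 [a3 a4]]]. unfold BL, BU. lra. }
    destruct (Bk k Hk) as [k1 k2]. destruct (Bk m Hm) as [m1 m2].
    assert (W := CT xN HxN J n Hn).
    assert (Wl : BU J n - BL J n <= (99/100)^J * V0).
    { apply Rle_trans with (lam La2 La3 n * (BU J n - BL J n)); [|exact W].
      rewrite <- (Rmult_1_l (BU J n - BL J n)) at 1. apply Rmult_le_compat_r; lra. }
    assert (Hp : (99/100)^J * V0 < eps).
    { apply Rle_lt_trans with ((eps / (V0+1)) * V0).
      apply Rmult_le_compat_r; lra.
      apply Rlt_le_trans with ((eps / (V0+1)) * (V0 + 1)).
      apply Rmult_lt_compat_l. apply Rdiv_lt_0_compat; lra. lra.
      right. field. lra. }
    unfold Rdist. apply Rabs_def1; lra. }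
  destruct (R_complete _ Cauchy) as [l Hl]. exists l. exact Hl.
Qed.
Definition Good (x : nat -> R) : Prop :=
  x 0%nat = 0 /\ (forall n, (1 <= n)%nat -> 0 <= x n <= 1) /\
  (forall n, (1 <= n)%nat -> x n = 0 -> x (S n) = 0).
Definition Tb (m : nat) (c : R) (x : nat -> R) : Prop := forall n, (m <= n)%nat -> x n <= c.

Lemma hR_zero a b e : hR a b e = 0 -> 0 <= a -> 0 <= b -> 0 <= e -> a = 0.
Proof.
  intros H Ha Hb He. unfold hR in H.
  assert (0 < 1 + a + a*b) by nra.
  assert (a * (1 + b + b*e) = 0).
  { apply (Rmult_eq_reg_r (/ (1 + a + a*b))). rewrite Rmult_0_l. exact H.
    apply Rinv_neq_0_compat. lra. }
  apply Rmult_integral in H1. destruct H1; [auto|]. nra.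
Qed.

Lemma pow_base_le y d : 0 <= y <= 1 -> (1 <= d)%nat -> y ^ d <= y.
Proof. intros. rewrite <- (pow_1 y) at 2. apply pow_anti; auto. Qed.

Lemma good_psi d x : (1 <= d)%nat -> Good x -> Good (psi d x).
Proof.
  intros Hd [G0 [G1 G2]]. split; [reflexivity|]. split.
  - intros n Hn. destruct n as [|[|k]]; [lia| |].
    + rewrite psi_1. destruct (G1 1%nat) as [a b]; [lia|]. destruct (G1 2%nat) as [c e]; [lia|].
      assert (0 <= gR (x 1%nat) (x 2%nat)) by (apply gR_nonneg; lra).
      assert (gR (x 1%nat) (x 2%nat) <= 1) by (apply gR_le1; lra).
      split. apply pow_le; lra. apply pow_le1; lra.
    + rewrite psi_S. destruct (G1 (S k)) as [a b]; [lia|]. destruct (G1 (S (S k))) as [c e]; [lia|].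
      destruct (G1 (S (S (S k)))) as [f g]; [lia|].
      assert (0 <= hR (x (S k)) (x (S (S k))) (x (S (S (S k))))) by (apply hR_nonneg; lra).
      assert (hR (x (S k)) (x (S (S k))) (x (S (S (S k)))) <= 1) by (apply hR_le1; lra).
      split. apply pow_le; lra. apply pow_le1; lra.
  - intros n Hn H0. destruct n as [|[|k]]; [lia| |].
    + rewrite psi_1 in H0. exfalso. destruct (G1 1%nat) as [a b]; [lia|]. destruct (G1 2%nat) as [c e]; [lia|].
      assert (0 < gR (x 1%nat) (x 2%nat)).
      { unfold gR. apply Rdiv_lt_0_compat; nra. }
      assert (0 < gR (x 1%nat) (x 2%nat) ^ d) by (apply pow_lt; lra). lra.
    + rewrite psi_S in H0. rewrite psi_S.
      destruct (G1 (S k)) as [a b]; [lia|]. destruct (G1 (S (S k))) as [c e]; [lia|].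
      destruct (G1 (S (S (S k)))) as [f g]; [lia|].
      destruct (Req_dec (hR (x (S k)) (x (S (S k))) (x (S (S (S k))))) 0) as [Z|NZ];
        [|exfalso; exact (pow_nonzero _ d NZ H0)].
      apply hR_zero in Z; try lra. rename Z into H0'.
      assert (X : x (S (S k)) = 0) by (apply G2; [lia|exact H0']).
      rewrite X. unfold hR. rewrite Rmult_0_l. unfold Rdiv. rewrite Rmult_0_l.
      destruct d; [lia|]. simpl. ring.
Qed.

Lemma good_iter d x k : (1 <= d)%nat -> Good x -> Good (psi_iter d k x).
Proof. intros Hd G. induction k. exact G. rewrite psi_iter_S. apply good_psi; auto. Qed.

Lemma T_step d x m c : (1 <= d)%nat -> Good x -> Tb m c x -> (3 <= m)%nat -> 0 <= c <= 1 ->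
  Tb (m - 1) ((2 + c)/3) (psi d x).
Proof.
  intros Hd [G0 [G1 G2]] HT Hm Hc n Hn.
  destruct n as [|[|k]]; [lia|lia|]. rewrite psi_S.
  destruct (G1 (S k)) as [a b]; [lia|]. destruct (G1 (S (S k))) as [c1 e]; [lia|].
  destruct (G1 (S (S (S k)))) as [f g]; [lia|].
  assert (T3 := HT (S (S (S k))) ltac:(lia)).
  assert (H1 : hR (x (S k)) (x (S (S k))) (x (S (S (S k)))) <= hR 1 1 c) by (apply hR_mono; lra).
  rewrite hR_11c in H1 by lra.
  assert (0 <= hR (x (S k)) (x (S (S k))) (x (S (S (S k))))) by (apply hR_nonneg; lra).
  apply Rle_trans with (hR (x (S k)) (x (S (S k))) (x (S (S (S k))))); [|lra].
  apply pow_base_le; [lra|lia].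
Qed.

Lemma T2_step d x c : (2 <= d)%nat -> Good x -> Tb 2 c x -> 0 <= c <= 1 ->
  Tb 2 (hR 1 c c ^ 2) (psi d x).
Proof.
  intros Hd [G0 [G1 G2]] HT Hc n Hn.
  destruct n as [|[|k]]; [lia|lia|]. rewrite psi_S.
  destruct (G1 (S k)) as [a b]; [lia|]. destruct (G1 (S (S k))) as [c1 e]; [lia|].
  destruct (G1 (S (S (S k)))) as [f g]; [lia|].
  assert (T2 := HT (S (S k)) ltac:(lia)). assert (T3 := HT (S (S (S k))) ltac:(lia)).
  assert (H1 : hR (x (S k)) (x (S (S k))) (x (S (S (S k)))) <= hR 1 c c) by (apply hR_mono; lra).
  assert (0 <= hR (x (S k)) (x (S (S k))) (x (S (S (S k))))) by (apply hR_nonneg; lra).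
  assert (hR 1 c c <= 1) by (apply hR_le1; lra).
  apply Rle_trans with (hR (x (S k)) (x (S (S k))) (x (S (S (S k)))) ^ 2).
  apply pow_anti; [split; lra| lia].
  apply pow_incr; lra.
Qed.

Lemma qgap c : 1/2 <= c <= 1 -> hR 1 c c ^ 2 <= 1 - (73/72) * (1 - c).
Proof.
  intros Hc. unfold hR.
  replace ((1 * (1 + c + c * c) / (1 + 1 + 1 * c)) ^ 2) with ((1 + c + c*c)^2 / ((2+c)^2)) by (field; lra).
  apply Rle_trans with (((1 - 73/72*(1-c)) * (2+c)^2) / ((2+c)^2)); [|right; field; lra].
  apply div_le_div; try nra.
  assert (P : 0 <= c*c*c + 2*c*c + c - 1 - (2+c)*(2+c)/72) by nra.
  assert (0 <= (1-c) * (c*c*c + 2*c*c + c - 1 - (2+c)*(2+c)/72)) by (apply Rmult_le_pos; lra).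
  nra.
Qed.

Lemma T_mono m c c' x : Tb m c x -> c <= c' -> Tb m c' x.
Proof. intros H Hc n Hn. specialize (H n Hn). lra. Qed.

Lemma reach_T2 d : (2 <= d)%nat -> forall m x c, Good x -> Tb m c x -> 1/2 <= c < 1 ->
  exists c', 1/2 <= c' < 1 /\ Tb 2 c' (psi_iter d (m - 2) x).
Proof.
  intros Hd m. induction m as [|m IH]; intros x c G HT Hc.
  - exists c. split; auto. simpl. intros n Hn. apply HT. lia.
  - destruct (le_lt_dec m 1) as [Hm|Hm].
    + exists c. split; auto. replace (S m - 2)%nat with 0%nat by lia. simpl. intros n Hn. apply HT. lia.
    + assert (HT' := T_step d x (S m) c ltac:(lia) G HT ltac:(lia) ltac:(lra)).
      replace (S m - 1)%nat with m in HT' by lia.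
      destruct (IH (psi d x) ((2+c)/3) (good_psi d x ltac:(lia) G) HT' ltac:(lra)) as [c' [Hc' HT2]].
      exists c'. split; auto. replace (S m - 2)%nat with (S (m - 2)) by lia.
      rewrite psi_iter_S'. exact HT2.
Qed.

Lemma S_inv d x c : (2 <= d)%nat -> Good x -> Tb 2 c x -> 1/2 <= c < 1 -> Tb 2 c (psi d x).
Proof.
  intros Hd G HT Hc. apply T_mono with (hR 1 c c ^ 2). apply T2_step; auto; lra.
  assert (X := qgap c ltac:(lra)). lra.
Qed.

Lemma reach_half d : (2 <= d)%nat -> forall j x e, Good x -> 0 < e <= 1/2 -> Tb 2 (1 - e) x ->
  INR j * e / 72 >= 1/2 - e -> exists K, Tb 2 (1/2) (psi_iter d K x).
Proof.
  intros Hd j. induction j as [|j IH]; intros x e G He HT Hj.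
  - exists 0%nat. simpl. apply T_mono with (1 - e). exact HT. simpl in Hj. lra.
  - assert (HT1 := T2_step d x (1 - e) Hd G HT ltac:(lra)).
    assert (Q := qgap (1 - e) ltac:(lra)).
    destruct (Rle_dec (1/2) (73/72 * e)) as [Hb|Hb].
    + exists 1%nat. simpl. apply T_mono with (1 := HT1). lra.
    + destruct (IH (psi d x) (73/72 * e) (good_psi d x ltac:(lia) G) ltac:(lra)) as [K HK].
      * apply T_mono with (1 := HT1). lra.
      * rewrite S_INR in Hj. assert (0 <= INR j) by apply pos_INR.
        assert (INR j * e <= INR j * (73/72 * e)) by (apply Rmult_le_compat_l; lra). lra.
      * exists (S K). rewrite psi_iter_S'. exact HK.
Qed.
Section CalR.
Variables (x : nat -> R) (c : R).
Hypotheses (Hx0 : x 0%nat = 0) (Hpos : forall n, (1 <= n)%nat -> 0 <= x n)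
  (Hc : forall n, (2 <= n)%nat -> x n <= c) (Hc1 : 0 <= c < 1)
  (Hz : forall n, (1 <= n)%nat -> x n = 0 -> x (S n) = 0).

Fixpoint Pp (n : nat) : R := match n with O => 1 | S k => Pp k * x (S k) end.

Lemma Pp_nonneg n : 0 <= Pp n.
Proof. induction n; simpl. lra. apply Rmult_le_pos; auto. apply Hpos; lia. Qed.

Lemma Pp_bound k : Pp (S k) <= x 1%nat * c ^ k.
Proof.
  induction k. simpl. lra.
  change (Pp (S (S k))) with (Pp (S k) * x (S (S k))). simpl pow.
  assert (0 <= Pp (S k)) by apply Pp_nonneg.
  assert (0 <= x (S (S k)) <= c) by (split; [apply Hpos; lia| apply Hc; lia]).
  apply Rle_trans with (x 1%nat * c ^ k * c). apply Rmult_le_compat; lra. right; ring.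
Qed.

Lemma Pp_zero k : Pp k = 0 -> x (S k) = 0.
Proof.
  induction k; simpl; intros H. lra.
  apply Rmult_integral in H. destruct H as [H|H].
  - apply Hz. lia. apply IHk. exact H.
  - apply Hz. lia. exact H.
Qed.

Lemma Pp_series : {l : R | Un_cv (sum_f_R0 (fun k => Pp (S k))) l}.
Proof.
  apply Rseries_CV_comp with (fun k => c ^ k * x 1%nat).
  - intros n. split. apply Pp_nonneg. rewrite Rmult_comm. apply Pp_bound.
  - exists (/ (1 - c) * x 1%nat).
    assert (G := GP_infinite c ltac:(rewrite Rabs_pos_eq; lra)).
    intros eps Heps.
    destruct (G (eps / (Rabs (x 1%nat) + 1))) as [N HN].
    { apply Rdiv_lt_0_compat. lra. assert (0 <= Rabs (x 1%nat)) by apply Rabs_pos. lra. }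
    exists N. intros n Hn. specialize (HN n Hn).
    unfold Rdist in *. rewrite <- scal_sum.
    replace (sum_f_R0 (fun n0 : nat => 1 * c ^ n0) n) with (sum_f_R0 (fun k => c ^ k) n) in HN.
    2:{ apply sum_eq. intros. ring. }
    assert (E : forall a, Rabs (x 1%nat * a - / (1 - c) * x 1%nat) = Rabs (x 1%nat) * Rabs (a - / (1 - c))).
    { intros a. rewrite <- Rabs_mult. f_equal. ring. }
    rewrite E.
    assert (0 <= Rabs (x 1%nat)) by apply Rabs_pos.
    apply Rle_lt_trans with (Rabs (x 1%nat) * (eps / (Rabs (x 1%nat) + 1))).
    apply Rmult_le_compat_l. lra. left; exact HN.
    apply Rlt_le_trans with ((Rabs (x 1%nat) + 1) * (eps / (Rabs (x 1%nat) + 1))).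
    apply Rmult_lt_compat_r. apply Rdiv_lt_0_compat; lra. lra.
    right. field. lra.
Qed.

Lemma calR_of : in_calR x.
Proof.
  destruct Pp_series as [Sl HS].
  assert (HS0 : 0 <= Sl).
  { apply Rnot_lt_le. intro Hneg. destruct (HS (- Sl)) as [N HN]. lra.
    specialize (HN N (le_n N)). unfold Rdist in HN.
    assert (0 <= sum_f_R0 (fun k => Pp (S k)) N).
    { apply cond_pos_sum. intros. apply Pp_nonneg. }
    rewrite Rabs_pos_eq in HN by lra. lra. }
  set (Zt := 1 + 2 * Sl).
  assert (HZt : 1 <= Zt) by (unfold Zt; lra).
  set (z := fun i : Z => Pp (Z.abs_nat i) / Zt).
  exists z. split.
  - split; [split|split].
    + intros i. unfold z. apply div_nonneg. apply Pp_nonneg. lra.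
    +
      assert (Hsum : forall N, sum_f_R0 (Zsum_term z) (S N) = (1 + 2 * sum_f_R0 (fun k => Pp (S k)) N) / Zt).
      { induction N.
        - simpl. unfold z. simpl. field. lra.
        - rewrite tech5. rewrite IHN. rewrite tech5 with (An := fun k => Pp (S k)).
          unfold Zsum_term, z. rewrite Zabs2Nat.id.
          replace (Z.abs_nat (- Z.of_nat (S (S N)))) with (S (S N)) by lia. field. lra. }
      intros eps Heps. destruct (HS (eps / 2)) as [N HN]. lra.
      exists (S N). intros n Hn. destruct n as [|n]; [lia|].
      rewrite Hsum. specialize (HN n ltac:(lia)). unfold Rdist in *.
      replace ((1 + 2 * sum_f_R0 (fun k => Pp (S k)) n) / Zt - 1)
        with (2 * (sum_f_R0 (fun k => Pp (S k)) n - Sl) / Zt) by (unfold Zt; field; lra).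
      unfold Rdiv. rewrite Rabs_mult, Rabs_mult. rewrite (Rabs_pos_eq 2) by lra.
      rewrite (Rabs_pos_eq (/ Zt)). 2:{ left. apply Rinv_0_lt_compat. lra. }
      assert (/ Zt <= 1). { rewrite <- Rinv_1. apply Rinv_le_contravar; lra. }
      assert (0 <= Rabs (sum_f_R0 (fun k : nat => Pp (S k)) n - Sl)) by apply Rabs_pos.
      assert (0 < / Zt) by (apply Rinv_0_lt_compat; lra).
      apply Rle_lt_trans with (2 * Rabs (sum_f_R0 (fun k : nat => Pp (S k)) n - Sl) * 1).
      apply Rmult_le_compat_l; lra. lra.
    + intros i. unfold z. replace (Z.abs_nat (- i)) with (Z.abs_nat i) by lia. reflexivity.
    + destruct (Classical_Prop.classic (exists m, (1 <= m)%nat /\ x m = 0)) as [[m [Hm1 Hm2]]|Hno].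
      * left.
        assert (Least : exists m0, (1 <= m0)%nat /\ x m0 = 0 /\ forall i, (1 <= i < m0)%nat -> x i <> 0).
        { clear -Hm1 Hm2. induction m as [m IHm] using lt_wf_ind.
          destruct (Classical_Prop.classic (exists i, (1 <= i < m)%nat /\ x i = 0)) as [[i [Hi1 Hi2]]|Hn].
          - apply (IHm i); tauto.
          - exists m. split; auto. split; auto. intros i Hi E. apply Hn. exists i. auto. }
        destruct Least as [m0 [L1 [L2 L3]]].
        assert (Ppos : forall n, (n < m0)%nat -> 0 < Pp n).
        { induction n; intros Hn. simpl; lra. simpl.
          assert (0 <= x (S n)) by (apply Hpos; lia).
          assert (x (S n) <> 0) by (apply L3; lia).
          apply Rmult_lt_0_compat. apply IHn. lia. lra. }
        assert (Pzero : forall n, (m0 <= n)%nat -> Pp n = 0).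
        { induction n; intros Hn. lia. simpl. destruct (Nat.eq_dec (S n) m0) as [E|E].
          - rewrite E, L2. ring.
          - rewrite IHn by lia. ring. }
        exists (- (Z.of_nat m0 - 1))%Z, (Z.of_nat m0 - 1)%Z. intros i. unfold z. split.
        -- intros Hne. destruct (le_lt_dec m0 (Z.abs_nat i)) as [Hle|Hlt].
           ++ exfalso. apply Hne. rewrite Pzero by auto. unfold Rdiv. ring.
           ++ lia.
        -- intros Hi. assert (Hlt : (Z.abs_nat i < m0)%nat) by lia.
           assert (0 < Pp (Z.abs_nat i)) by auto.
           assert (0 < Pp (Z.abs_nat i) / Zt) by (apply Rdiv_lt_0_compat; lra). lra.
      * right. intros i. unfold z.
        assert (Ppos : forall n, 0 < Pp n).
        { induction n. simpl; lra. simpl.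
          assert (0 <= x (S n)) by (apply Hpos; lia).
          assert (x (S n) <> 0) by (intro E; apply Hno; exists (S n); split; [lia|auto]).
          apply Rmult_lt_0_compat. auto. lra. }
        assert (0 < Pp (Z.abs_nat i) / Zt) by (apply Rdiv_lt_0_compat; [auto|lra]). lra.
  - apply functional_extensionality. intros n. destruct n as [|k].
    + simpl. auto.
    + unfold Rmap. replace (Z.of_nat (S k) - 1)%Z with (Z.of_nat k) by lia.
      unfold z. rewrite !Zabs2Nat.id.
      destruct (Req_EM_T (Pp k / Zt) 0) as [E|E].
      * assert (Pp k = 0).
        { apply (Rmult_eq_reg_r (/ Zt)). rewrite Rmult_0_l. exact E. apply Rinv_neq_0_compat. lra. }
        apply Pp_zero. auto.
      * assert (Pp k <> 0). { intro E'. apply E. rewrite E'. unfold Rdiv. ring. }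
        simpl Pp. field. split; lra.
Qed.
End CalR.
Lemma Q2R_half : Q2R (1#2) = 1/2.
Proof. unfold Q2R. simpl. field. Qed.

Lemma inB_b0 x : Good x -> Tb 2 (1/2) x -> inB (toQ zb0) x.
Proof.
  intros [G0 [G1 G2]] HT n Hn.
  destruct n as [|[|[|n]]]; [lia| | |]; cbn [LB UB toQ zb0 bl1 bu1 bl2 bu2 bs zl1 zu1 zl2 zu2 zs];
    rewrite ?Q2R_z; unfold DZ.
  - destruct (G1 1%nat); [lia|]. lra.
  - destruct (G1 2%nat); [lia|]. assert (HT2 := HT 2%nat ltac:(lia)). lra.
  - destruct (G1 (S (S (S n)))); [lia|]. assert (HT2 := HT (S (S (S n))) ltac:(lia)). lra.
Qed.

Lemma cv_shift (u : nat -> R) K l : Un_cv (fun k => u (k + K)%nat) l -> Un_cv u l.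
Proof.
  intros H eps Heps. destruct (H eps Heps) as [N HN]. exists (N + K)%nat. intros n Hn.
  replace n with ((n - K) + K)%nat by lia. apply HN. lia.
Qed.

Lemma Rmap_S w i : Rmap w (S i) =
  if Req_EM_T (w (Z.of_nat i)) 0 then 0 else w (Z.of_nat (S i)) / w (Z.of_nat i).
Proof. unfold Rmap. replace (Z.of_nat (S i) - 1)%Z with (Z.of_nat i) by lia. reflexivity. Qed.

Lemma good_init w : good w -> exists k c, 1/2 <= c < 1 /\ Good (Rmap w) /\ Tb (S k) c (Rmap w).
Proof.
  intros [Hnn [Hsym [Hw0 [k [c [Hc [Hflat Hdec]]]]]]].
  assert (Wpos : forall i, (i <= k)%nat -> 0 < w (Z.of_nat i)).
  { induction i; intros Hi. simpl. exact Hw0. rewrite <- Hflat by lia. apply IHi. lia. }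
  exists k, (Rmax c (1/2)).
  assert (Hm1 : c <= Rmax c (1/2)) by apply Rmax_l. assert (Hm2 : 1/2 <= Rmax c (1/2)) by apply Rmax_r.
  assert (Hm3 : Rmax c (1/2) < 1) by (apply Rmax_lub_lt; lra).
  assert (Ratio : forall i, 0 <= Rmap w (S i) <= 1 /\ ((k <= i)%nat -> Rmap w (S i) <= c)).
  { intros i. rewrite Rmap_S. destruct (Req_EM_T (w (Z.of_nat i)) 0) as [E|E].
    - split; [lra|]. intros; lra.
    - assert (0 < w (Z.of_nat i)) by (assert (X := Hnn (Z.of_nat i)); lra).
      assert (0 <= w (Z.of_nat (S i))) by apply Hnn.
      destruct (le_lt_dec k i) as [Hki|Hki].
      + assert (D := Hdec i Hki).
        assert (w (Z.of_nat (S i)) / w (Z.of_nat i) <= c).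
        { apply Rle_trans with (c * w (Z.of_nat i) / w (Z.of_nat i)).
          apply div_le_div; try lra. nra. right; field; lra. }
        assert (0 <= w (Z.of_nat (S i)) / w (Z.of_nat i)) by (apply div_nonneg; lra).
        split; [lra|]. intros; lra.
      + rewrite <- Hflat by lia. replace (w (Z.of_nat i) / w (Z.of_nat i)) with 1 by (field; lra).
        split; [lra|]. intros; lia. }
  split; [lra|]. split; [split; [reflexivity|split]|].
  - intros n Hn. destruct n; [lia|]. apply Ratio.
  - intros n Hn H0. destruct n as [|i]; [lia|]. rewrite Rmap_S.
    assert (Wz : w (Z.of_nat (S i)) = 0).
    { rewrite Rmap_S in H0. destruct (Req_EM_T (w (Z.of_nat i)) 0) as [E|E].
      - destruct (le_lt_dec k i) as [Hki|Hki].
        + assert (D := Hdec i Hki). assert (X := Hnn (Z.of_nat (S i))). rewrite E in D. lra.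
        + assert (X := Wpos i ltac:(lia)). lra.
      - apply (Rmult_eq_reg_r (/ w (Z.of_nat i))). rewrite Rmult_0_l. exact H0.
        apply Rinv_neq_0_compat. exact E. }
    destruct (Req_EM_T (w (Z.of_nat (S i))) 0) as [E|E]; [reflexivity|contradiction].
  - intros n Hn. destruct n as [|i]; [lia|]. destruct (Ratio i) as [_ R2]. specialize (R2 ltac:(lia)). lra.
Qed.

Theorem proposition2p7 (d : nat) (hd : (2 <= d <= 7)%nat)
  (w : Z -> R) (hgood : good w) (hnorm : is_prob w) :
  exists c : R, 0 < c < 1 /\
    (exists K : nat, forall k : nat, (K <= k)%nat ->
        S_abc 0 1 c (psi_iter d k (Rmap w))) /\
    (forall n : nat, exists l : R,
        Un_cv (fun k : nat => psi_iter d k (Rmap w) n) l).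
Proof.
  destruct (good_init w hgood) as [k [c0 [Hc0 [G0 T0]]]].
  assert (Hd2 : (2 <= d)%nat) by lia. assert (Hd1 : (1 <= d)%nat) by lia.
  destruct (reach_T2 d Hd2 (S k) (Rmap w) c0 G0 T0 Hc0) as [c [Hc HT]].
  set (K1 := (S k - 2)%nat) in *.
  set (y1 := psi_iter d K1 (Rmap w)) in *.
  assert (Gy1 : Good y1) by (apply good_iter; auto).
  assert (Inv : forall j, Good (psi_iter d j y1) /\ Tb 2 c (psi_iter d j y1)).
  { induction j as [|j [IH1 IH2]]. split; auto. rewrite psi_iter_S. split.
    apply good_psi; auto. apply S_inv; auto. }
  exists c. split; [lra|]. split.
  - exists K1. intros k' Hk'. replace k' with ((k' - K1) + K1)%nat by lia.
    rewrite psi_iter_add. fold y1. destruct (Inv (k' - K1)%nat) as [[Ga [Gb Gc]] Tc].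
    set (y := psi_iter d (k' - K1) y1) in *.
    split.
    + apply (calR_of y c); auto.
      * intros n Hn. apply Gb. exact Hn.
      * lra.
    + split. destruct (Gb 1%nat); [lia|]. lra.
      intros n Hn. destruct (Gb n); [lia|]. split. lra. apply Tc. exact Hn.
  - intros n. destruct n as [|n].
    + exists 0. intros eps Heps. exists 0%nat. intros m Hm.
      destruct (good_iter d (Rmap w) m Hd1 G0) as [Z0 _]. rewrite Z0. unfold Rdist.
      rewrite Rminus_0_r, Rabs_R0. lra.
    + set (e := 1 - c).
      destruct (INR_unbounded (36 / e)) as [j Hj].
      assert (He : 0 < e <= 1/2) by (unfold e; lra).
      assert (Hj' : INR j * e / 72 >= 1/2 - e).
      { assert (INR j * e > 36 / e * e) by (apply Rmult_gt_compat_r; lra).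
        replace (36 / e * e) with 36 in H by (field; lra). lra. }
      destruct (reach_half d Hd2 j y1 e Gy1 He ltac:(replace (1 - e) with c by (unfold e; ring); exact HT) Hj') as [K2 HK2].
      set (y2 := psi_iter d K2 y1) in *.
      assert (Gy2 : Good y2) by (apply good_iter; auto).
      destruct (conv_from_box d y2 hd (inB_b0 y2 Gy2 HK2) (S n) ltac:(lia)) as [l Hl].
      exists l. apply (cv_shift _ (K2 + K1)%nat).
      intros eps Heps. destruct (Hl eps Heps) as [N HN]. exists N. intros m Hm.
      rewrite psi_iter_add, psi_iter_add. fold y1. fold y2. apply HN. exact Hm.
Qed.
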